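(* Let $n\ge2$ be an integer, $j$ a positive integer, $\lambda\in\mathbb{R}$ with $\lambda\ge\frac{(n-1)j}{2}$, and set $\alpha=1-\frac1n$, $\beta=\frac12(1-\frac1n)-\frac{\lambda}{jn}$. Define $\mathcal{G}(z)=e^{jz^n/2}\,\mathcal{M}(\beta,\alpha,-jz^n)$ and $\mathcal{D}(z)=e^{jz^n/2}\,\mathcal{T}(\beta,\alpha,-jz^n)$ for $z>0$. Then the Wronskian $\mathcal{G}(z)\mathcal{D}'(z)-\mathcal{G}'(z)\mathcal{D}(z)$ is constant, equal to $\frac{\Gamma(\alpha-1)}{\Gamma(\alpha-\beta)}\,j^{1/n}$.
   Context: $(x)_k=\prod_{m=1}^k(x+m-1)$, $(x)_0=1$. Kummer's function: $\mathcal{M}(\beta,\alpha,y)=\sum_{k\ge0}\frac{(\beta)_k}{(\alpha)_k}\frac{y^k}{k!}$. For $y<0$ and $\alpha>\beta$: $\mathcal{T}(\beta,\alpha,y)=\frac{e^y}{\Gamma(\alpha-\beta)}\int_0^\infty e^{yt}t^{\alpha-\beta-1}(1+t)^{\beta-1}\,dt$. *)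

(* Defs.v *)
From Stdlib Require Import Reals ZArith.
From Coquelicot Require Import Coquelicot.
Open Scope R_scope.

Fixpoint poch (x : R) (k : nat) : R :=
  match k with
  | O => 1
  | S k' => poch x k' * (x + INR k')
  end.

Definition kummerM (b a y : R) : R :=
  Series (fun k => poch b k / poch a k * y ^ k / INR (fact k)).

Definition Gamma_pos (s : R) : R :=
  RInt_gen (fun t => Rpower t (s - 1) * exp (- t))
           (at_right 0) (Rbar_locally p_infty).

(* Gamma on all reals that are not non-positive integers, extended from
   (0,oo) by the functional equation: Gamma x = Gamma(x+N)/(x)_N with
   N = max(0, ceil-ish(-x)) so that x + N > 0. *)
Definition Gamma (x : R) : R :=
  let N := Z.to_nat (up (- x)) in
  Gamma_pos (x + INR N) / poch x N.

(* Tricomi-type function, for y < 0 and a > b: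
   T(b,a,y) = e^y/Gamma(a-b) int_0^oo e^(y t) t^(a-b-1) (1+t)^(b-1) dt. *)
Definition kummerT (b a y : R) : R :=
  exp y / Gamma (a - b) *
  RInt_gen (fun t => exp (y * t) * Rpower t (a - b - 1) * Rpower (1 + t) (b - 1))
           (at_right 0) (Rbar_locally p_infty).

(* Main.v *)
Require Import Defs.
From Stdlib Require Import Reals Lra Lia ZArith.
From Coquelicot Require Import Coquelicot.
Open Scope R_scope.
From Stdlib Require Import FunctionalExtensionality.

Notation F0 := (filter_prod (at_right 0) (Rbar_locally p_infty)).

Lemma ballR (x e y : R) : ball x e y <-> Rabs (y - x) < e.
Proof. reflexivity. Qed.

Lemma F0_intro (P : R * R -> Prop) :
  (exists d M, 0 < d /\ forall u v, 0 < u < d -> M < v -> P (u, v)) -> F0 P.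
Proof.
  intros [d [M [Hd H]]].
  apply Filter_prod with (fun u => 0 < u < d) (fun v => M < v).
  - exists (mkposreal d Hd). intros y Hy Hy0. apply ballR in Hy. simpl in Hy.
    split; auto. apply Rabs_lt_between in Hy. rewrite Rminus_0_r in Hy. lra.
  - exists M. auto.
  - intros; apply H; auto.
Qed.

Lemma F0_elim (P : R * R -> Prop) :
  F0 P -> exists d M, 0 < d /\ forall u v, 0 < u < d -> M < v -> P (u, v).
Proof.
  intros [Q R HQ HR H].
  destruct HQ as [e He]. destruct HR as [M HM].
  exists e, M. split. apply cond_pos.
  intros u v Hu Hv. apply H; auto. apply He; try lra.
  apply ballR. rewrite Rabs_right; lra.
Qed.

Lemma is_RInt_gen_lim (f : R -> R) (l : R) :
  F0 (fun ab => ex_RInt f (fst ab) (snd ab)) ->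
  filterlim (fun ab => RInt f (fst ab) (snd ab)) F0 (locally l) ->
  is_RInt_gen f (at_right 0) (Rbar_locally p_infty) l.
Proof.
  intros Hex Hlim P HP.
  unfold filtermapi.
  specialize (Hlim P HP). unfold filtermap in Hlim.
  generalize (filter_and _ _ Hex Hlim).
  apply filter_imp. intros ab [H1 H2].
  exists (RInt f (fst ab) (snd ab)). split; auto.
  exact (RInt_correct f _ _ H1).
Qed.

Lemma is_RInt_gen_lim_inv (f : R -> R) (l : R) :
  is_RInt_gen f (at_right 0) (Rbar_locally p_infty) l ->
  F0 (fun ab => ex_RInt f (fst ab) (snd ab)) /\
  filterlim (fun ab => RInt f (fst ab) (snd ab)) F0 (locally l).
Proof.
  intros H. split.
  - assert (H1 := H (fun _ => True) (filter_true)).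
    unfold filtermapi in H1. revert H1. apply filter_imp.
    intros ab [y [Hy _]]. exists y; auto.
  - intros P HP. specialize (H P HP). unfold filtermapi in H. unfold filtermap.
    revert H. apply filter_imp. intros ab [y [Hy HPy]].
    rewrite (is_RInt_unique _ _ _ _ Hy). auto.
Qed.

Lemma is_derive_eq (f : R -> R) x l l' : is_derive f x l -> l = l' -> is_derive f x l'.
Proof. intros H ->; auto. Qed.

Lemma is_derive_Rpower (t p : R) : 0 < t -> is_derive (fun t => Rpower t p) t (p * Rpower t (p - 1)).
Proof. intros Ht. apply is_derive_Reals. apply derivable_pt_lim_power; auto. Qed.

Lemma ex_derive_Rpower (t p : R) : 0 < t -> ex_derive (fun t => Rpower t p) t.
Proof. intros Ht. eexists. apply is_derive_Rpower; auto. Qed.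

Lemma Derive_Rpower (t p : R) : 0 < t -> Derive (fun t => Rpower t p) t = p * Rpower t (p - 1).
Proof. intros Ht. apply is_derive_unique. apply is_derive_Rpower; auto. Qed.

Lemma continuous_Rpower (t p : R) : 0 < t -> continuous (fun t => Rpower t p) t.
Proof. intros Ht. refine (ex_derive_continuous _ _ _). apply ex_derive_Rpower; auto. Qed.

Lemma Rpower_S (t p : R) : 0 < t -> Rpower t (p + 1) = Rpower t p * t.
Proof. intros Ht. rewrite Rpower_plus, Rpower_1; auto. Qed.

Lemma is_derive_powint (C p t : R) : 0 < t -> p + 1 <> 0 ->
  is_derive (fun t => C * Rpower t (p + 1) / (p + 1)) t (C * Rpower t p).
Proof.
  intros Ht Hp. auto_derive. apply ex_derive_Rpower; auto.
  rewrite Derive_Rpower; auto. replace (p + 1 - 1) with p by ring. field. auto.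
Qed.

Lemma is_derive_expint (C c t : R) : c <> 0 ->
  is_derive (fun t => - C * exp (- c * t) / c) t (C * exp (- c * t)).
Proof.
  intros Hc. auto_derive. auto. field. auto.
Qed.

Lemma RInt_abs_bound_le (f g G : R -> R) (a b : R) : a <= b ->
  (forall t, a <= t <= b -> continuous f t) ->
  (forall t, a <= t <= b -> Rabs (f t) <= g t) ->
  (forall t, a <= t <= b -> is_derive G t (g t)) ->
  (forall t, a <= t <= b -> continuous g t) ->
  Rabs (RInt f a b) <= G b - G a.
Proof.
  intros Hab Hf Hfg HG Hg.
  assert (Hexf : ex_RInt f a b).
  { apply (ex_RInt_continuous (V:=R_CompleteNormedModule)). rewrite Rmin_left, Rmax_right by lra. auto. }
  eapply Rle_trans. apply abs_RInt_le; auto.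
  assert (HI : is_RInt g a b (minus (G b) (G a))).
  { apply (is_RInt_derive (V:=R_CompleteNormedModule)); rewrite Rmin_left, Rmax_right by lra; auto. }
  replace (G b - G a) with (minus (G b) (G a)) by reflexivity. rewrite <- (is_RInt_unique _ _ _ _ HI).
  apply RInt_le; auto.
  - apply (ex_RInt_continuous (V:=R_CompleteNormedModule)). rewrite Rmin_left, Rmax_right by lra.
    intros; apply continuous_Rabs_comp; auto.
  - eexists; eauto.
  - intros; apply Hfg; lra.
Qed.

Lemma RInt_abs_bound (f g G : R -> R) (a b : R) :
  (forall t, Rmin a b <= t <= Rmax a b -> continuous f t) ->
  (forall t, Rmin a b <= t <= Rmax a b -> Rabs (f t) <= g t) ->
  (forall t, Rmin a b <= t <= Rmax a b -> is_derive G t (g t)) ->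
  (forall t, Rmin a b <= t <= Rmax a b -> continuous g t) ->
  Rabs (RInt f a b) <= Rabs (G b - G a).
Proof.
  intros Hf Hfg HG Hg.
  destruct (Rle_dec a b) as [Hab|Hab].
  - replace (Rmin a b) with a in * by (rewrite Rmin_left; lra).
    replace (Rmax a b) with b in * by (rewrite Rmax_right; lra).
    eapply Rle_trans. apply RInt_abs_bound_le with (g := g); auto.
    apply Rle_abs.
  - replace (Rmin a b) with b in * by (rewrite Rmin_right; lra).
    replace (Rmax a b) with a in * by (rewrite Rmax_left; lra).
    rewrite <- (opp_RInt_swap (V:=R_CompleteNormedModule)).
    2: { apply (ex_RInt_continuous (V:=R_CompleteNormedModule)). rewrite Rmin_left, Rmax_right by lra. auto. }
    change (opp (RInt f b a)) with (- RInt f b a). rewrite Rabs_Ropp.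
    eapply Rle_trans. apply RInt_abs_bound_le with (g := g); auto. lra.
    rewrite <- Rabs_Ropp. replace (- (G b - G a)) with (G a - G b) by ring. apply Rle_abs.
Qed.

Lemma exp_le_exp (x y : R) : x <= y -> exp x <= exp y.
Proof. intros [H|H]. left; apply exp_increasing; auto. subst; lra. Qed.

Lemma Rpower_1_l (p : R) : Rpower 1 p = 1.
Proof. unfold Rpower. rewrite ln_1, Rmult_0_r, exp_0. auto. Qed.

Lemma Rpower_pos (t p : R) : 0 < Rpower t p.
Proof. unfold Rpower. apply exp_pos. Qed.

Lemma Rpower_le_base (s w e : R) : 0 < s <= w -> 0 <= e -> Rpower s e <= Rpower w e.
Proof. intros H He. apply Rle_Rpower_l; auto. Qed.

Lemma small_pow (s e : R) : 0 < s -> 0 < e -> exists d, 0 < d <= 1 /\ Rpower d s < e.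
Proof.
  intros Hs He. set (d0 := Rpower (e/2) (/s)).
  assert (Hd0 : 0 < d0) by apply Rpower_pos.
  exists (Rmin 1 d0). split. split. apply Rmin_glb_lt; lra. apply Rmin_l.
  eapply Rle_lt_trans. apply Rpower_le_base. split. apply Rmin_glb_lt; lra. apply Rmin_r. lra.
  unfold d0. rewrite Rpower_mult. rewrite Rinv_l by lra. rewrite Rpower_1; lra.
Qed.

Lemma big_exp (c e : R) : 0 < c -> 0 < e -> exists M, 1 <= M /\ forall v, M <= v -> exp (- c * v) < e.
Proof.
  intros Hc He. exists (Rmax 1 (- ln (e/2) / c)). split. apply Rmax_l.
  intros v Hv. assert (H1 : - ln (e/2) / c <= v) by (eapply Rle_trans; [apply Rmax_r| exact Hv]).
  assert (H2 : - c * v <= ln (e/2)).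
  { apply Rmult_le_compat_l with (r := c) in H1; [|lra].
    replace (c * (- ln (e/2) / c)) with (- ln (e/2)) in H1 by (field; lra). lra. }
  eapply Rle_lt_trans. apply exp_le_exp; exact H2. rewrite exp_ln; lra.
Qed.

Lemma abs_diff_le (x y B : R) : 0 <= x <= B -> 0 <= y <= B -> Rabs (x - y) <= B.
Proof. intros. apply Rabs_le. lra. Qed.

Lemma continuous_Cpow (C p t : R) : 0 < t -> continuous (fun t => C * Rpower t p) t.
Proof. intros Ht. refine (ex_derive_continuous _ _ _). auto_derive. apply ex_derive_Rpower; lra. Qed.

Lemma continuous_Cexp (C c t : R) : continuous (fun t => C * exp (- c * t)) t.
Proof. refine (ex_derive_continuous _ _ _). auto_derive. auto. Qed.

Lemma ex_gen (f : R -> R) (p c C : R) : -1 < p -> 0 < c ->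
  (forall t, 0 < t -> continuous f t) ->
  (forall t, 0 < t <= 1 -> Rabs (f t) <= C * Rpower t p) ->
  (forall t, 1 <= t -> Rabs (f t) <= C * exp (- c * t)) ->
  ex_RInt_gen f (at_right 0) (Rbar_locally p_infty).
Proof.
  intros Hp Hc Hf H0 H1.
  assert (HC : 0 <= C).
  { specialize (H0 1 ltac:(lra)). rewrite Rpower_1_l in H0. generalize (Rabs_pos (f 1)). lra. }
  assert (Hex : F0 (fun ab => ex_RInt f (fst ab) (snd ab))).
  { apply F0_intro. exists 1, 1. split. lra. intros u v Hu Hv. simpl.
    apply (ex_RInt_continuous (V:=R_CompleteNormedModule)). intros z Hz. apply Hf.
    assert (0 < Rmin u v) by (apply Rmin_glb_lt; lra). lra. }
  assert (Hc2 : exists l : R, filterlim (fun ab => RInt f (fst ab) (snd ab)) F0 (locally l)).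
  { apply (filterlim_locally_cauchy (U := R_CompleteSpace) (F := F0)).
    intros eps. set (e := eps / 3).
    assert (He : 0 < e) by (unfold e; destruct eps; simpl; lra).
    destruct (small_pow (p+1) (e * (p+1) / (C+1))) as [d [Hd Hdp]]. lra.
    { apply Rdiv_lt_0_compat. apply Rmult_lt_0_compat; lra. lra. }
    destruct (big_exp c (e * c / (C+1))) as [M [HM HMe]]. lra.
    { apply Rdiv_lt_0_compat. apply Rmult_lt_0_compat; lra. lra. }
    exists (fun ab => 0 < fst ab < d /\ M < snd ab). split.
    { apply F0_intro. exists d, M. split. lra. intros; simpl; auto. }
    intros [u1 u2] [v1 v2] [Hu1 Hu2] [Hv1 Hv2]. simpl in *.
    apply ballR.
    assert (Hcont : forall a b, 0 < a -> 0 < b -> ex_RInt f a b).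
    { intros a b Ha Hb. apply (ex_RInt_continuous (V:=R_CompleteNormedModule)). intros z Hz. apply Hf.
      assert (0 < Rmin a b) by (apply Rmin_glb_lt; lra). lra. }
    assert (Hch : RInt f v1 v2 = RInt f v1 u1 + RInt f u1 u2 + RInt f u2 v2).
    { rewrite <- (RInt_Chasles (V:=R_CompleteNormedModule) f v1 u2 v2) by (apply Hcont; lra).
      rewrite <- (RInt_Chasles (V:=R_CompleteNormedModule) f v1 u1 u2) by (apply Hcont; lra).
      reflexivity. }
    rewrite Hch. replace (RInt f v1 u1 + RInt f u1 u2 + RInt f u2 v2 - RInt f u1 u2)
      with (RInt f v1 u1 + RInt f u2 v2) by ring.
    set (G0 := fun t => C * Rpower t (p + 1) / (p + 1)).
    set (G1 := fun t => - C * exp (- c * t) / c).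
    assert (B0 : Rabs (RInt f v1 u1) <= Rabs (G0 u1 - G0 v1)).
    { apply RInt_abs_bound with (g := fun t => C * Rpower t p).
      - intros t Ht. apply Hf. assert (0 < Rmin v1 u1) by (apply Rmin_glb_lt; lra). lra.
      - intros t Ht. apply H0. assert (0 < Rmin v1 u1) by (apply Rmin_glb_lt; lra).
        assert (Rmax v1 u1 <= 1) by (apply Rmax_lub; lra). lra.
      - intros t Ht. apply is_derive_powint. assert (0 < Rmin v1 u1) by (apply Rmin_glb_lt; lra). lra. lra.
      - intros t Ht. apply continuous_Cpow. assert (0 < Rmin v1 u1) by (apply Rmin_glb_lt; lra). lra. }
    assert (B1 : Rabs (RInt f u2 v2) <= Rabs (G1 v2 - G1 u2)).
    { apply RInt_abs_bound with (g := fun t => C * exp (- c * t)).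
      - intros t Ht. apply Hf. assert (M < Rmin u2 v2) by (apply Rmin_glb_lt; lra). lra.
      - intros t Ht. apply H1. assert (M < Rmin u2 v2) by (apply Rmin_glb_lt; lra). lra.
      - intros t Ht. apply is_derive_expint. lra.
      - intros t Ht. apply continuous_Cexp. }
    assert (HG0 : forall t, 0 < t <= d -> 0 <= G0 t <= e).
    { intros t Ht. unfold G0. split.
      - apply Rmult_le_pos. apply Rmult_le_pos; auto. left; apply Rpower_pos. left; apply Rinv_0_lt_compat; lra.
      - assert (Rpower t (p+1) <= Rpower d (p+1)) by (apply Rpower_le_base; lra).
        assert (C * Rpower t (p+1) <= (C+1) * Rpower d (p+1)).
        { apply Rmult_le_compat; try lra. left; apply Rpower_pos. }
        assert (Hq : (C+1) * Rpower d (p+1) < e * (p+1)).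
        { apply Rmult_lt_compat_l with (r := C+1) in Hdp; [|lra].
          replace ((C + 1) * (e * (p + 1) / (C + 1))) with (e * (p+1)) in Hdp by (field; lra). lra. }
        apply Rmult_le_reg_r with (r := p+1). lra. unfold Rdiv. rewrite Rmult_assoc, Rinv_l by lra. lra. }
    assert (HG1 : forall t, M <= t -> 0 <= - G1 t <= e).
    { intros t Ht. unfold G1. specialize (HMe t Ht). assert (0 < exp (- c * t)) by apply exp_pos. split.
      - replace (- (- C * exp (- c * t) / c)) with (C * exp (- c * t) / c) by (field; lra).
        apply Rmult_le_pos. apply Rmult_le_pos; lra. left; apply Rinv_0_lt_compat; lra.
      - replace (- (- C * exp (- c * t) / c)) with (C * exp (- c * t) / c) by (field; lra).
        assert (C * exp (- c * t) <= (C+1) * exp (- c * t)) by (apply Rmult_le_compat_r; lra).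
        assert (Hq : (C+1) * exp (- c * t) < e * c).
        { apply Rmult_lt_compat_l with (r := C+1) in HMe; [|lra].
          replace ((C + 1) * (e * c / (C + 1))) with (e * c) in HMe by (field; lra). lra. }
        apply Rmult_le_reg_r with (r := c). lra. unfold Rdiv. rewrite Rmult_assoc, Rinv_l by lra. lra. }
    assert (Rabs (G0 u1 - G0 v1) <= e) by (apply abs_diff_le; apply HG0; lra).
    assert (Rabs (G1 v2 - G1 u2) <= e).
    { replace (G1 v2 - G1 u2) with ((- G1 u2) - (- G1 v2)) by ring. apply abs_diff_le; apply HG1; lra. }
    eapply Rle_lt_trans. apply Rabs_triang.
    assert (e + e < eps) by (unfold e; destruct eps; simpl; lra). lra. }
  destruct Hc2 as [l Hl]. exists l. apply is_RInt_gen_lim; auto.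
Qed.

Lemma ln_le_mono (x y : R) : 0 < x -> x <= y -> ln x <= ln y.
Proof. intros Hx [H|H]. left; apply ln_increasing; auto. subst; lra. Qed.

Lemma Rpower_le1_a (t e : R) : 0 < t <= 1 -> 0 <= e -> Rpower t e <= 1.
Proof.
  intros Ht He. unfold Rpower. rewrite <- exp_0. apply exp_le_exp.
  assert (ln t <= 0) by (rewrite <- ln_1; apply ln_le_mono; lra). nra.
Qed.

Lemma Rpower_le1_b (t e : R) : 1 <= t -> e <= 0 -> Rpower t e <= 1.
Proof.
  intros Ht He. unfold Rpower. rewrite <- exp_0. apply exp_le_exp.
  assert (0 <= ln t) by (rewrite <- ln_1; apply ln_le_mono; lra). nra.
Qed.

Lemma Rle_eps (x y : R) : (forall eps, 0 < eps -> x <= y + eps) -> x <= y.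
Proof.
  intros H. destruct (Rle_dec x y); auto. exfalso.
  specialize (H ((x - y)/2) ltac:(lra)). lra.
Qed.

Lemma bound_gen (f : R -> R) l (p q C1 C2 : R) : -1 < p -> q < -1 ->
  is_RInt_gen f (at_right 0) (Rbar_locally p_infty) l ->
  (forall t, 0 < t -> continuous f t) ->
  (forall t, 0 < t <= 1 -> Rabs (f t) <= C1 * Rpower t p) ->
  (forall t, 1 <= t -> Rabs (f t) <= C2 * Rpower t q) ->
  Rabs l <= C1 / (p+1) + C2 / (- q - 1).
Proof.
  intros Hp Hq Hl Hf H0 H1.
  assert (HC1 : 0 <= C1).
  { specialize (H0 1 ltac:(lra)). rewrite Rpower_1_l in H0. generalize (Rabs_pos (f 1)). lra. }
  assert (HC2 : 0 <= C2).
  { specialize (H1 1 ltac:(lra)). rewrite Rpower_1_l in H1. generalize (Rabs_pos (f 1)). lra. }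
  destruct (is_RInt_gen_lim_inv f l Hl) as [Hex Hlim].
  apply Rle_eps. intros eps Heps.
  assert (HF := Hlim (fun y => Rabs (y - l) < eps) ltac:(exists (mkposreal eps Heps); intros y Hy; apply ballR in Hy; exact Hy)).
  unfold filtermap in HF.
  destruct (F0_elim _ (filter_and _ _ Hex HF)) as [d [M [Hd HdM]]].
  set (u := Rmin (d/2) (1/2)). set (v := Rmax (M+1) 2).
  assert (Hu : 0 < u < d) by (unfold u; split; [apply Rmin_glb_lt; lra | eapply Rle_lt_trans; [apply Rmin_l | lra]]).
  assert (Hu1 : u <= 1/2) by apply Rmin_r.
  assert (Hv : M < v) by (unfold v; eapply Rlt_le_trans; [|apply Rmax_l]; lra).
  assert (Hv2 : 2 <= v) by apply Rmax_r.
  destruct (HdM u v Hu Hv) as [Hexuv Hclose]. simpl in Hexuv, Hclose.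
  assert (Hcont : forall a b, 0 < a -> 0 < b -> ex_RInt f a b).
  { intros a b Ha Hb. apply (ex_RInt_continuous (V:=R_CompleteNormedModule)). intros z Hz. apply Hf.
    assert (0 < Rmin a b) by (apply Rmin_glb_lt; lra). lra. }
  assert (Hch : RInt f u v = RInt f u 1 + RInt f 1 v).
  { rewrite <- (RInt_Chasles (V:=R_CompleteNormedModule) f u 1 v) by (apply Hcont; lra). reflexivity. }
  set (G0 := fun t => C1 * Rpower t (p + 1) / (p + 1)).
  set (G1 := fun t => C2 * Rpower t (q + 1) / (q + 1)).
  assert (B0 : Rabs (RInt f u 1) <= Rabs (G0 1 - G0 u)).
  { apply RInt_abs_bound with (g := fun t => C1 * Rpower t p);
    rewrite Rmin_left, Rmax_right by lra; intros t Ht.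
    - apply Hf; lra.
    - apply H0; lra.
    - apply is_derive_powint; lra.
    - apply continuous_Cpow; lra. }
  assert (B1 : Rabs (RInt f 1 v) <= Rabs (G1 v - G1 1)).
  { apply RInt_abs_bound with (g := fun t => C2 * Rpower t q);
    rewrite Rmin_left, Rmax_right by lra; intros t Ht.
    - apply Hf; lra.
    - apply H1; lra.
    - apply is_derive_powint; lra.
    - apply continuous_Cpow; lra. }
  assert (HG0 : forall t, 0 < t <= 1 -> 0 <= G0 t <= C1 / (p+1)).
  { intros t Ht. unfold G0. assert (0 < Rpower t (p+1)) by apply Rpower_pos.
    assert (Rpower t (p+1) <= 1) by (apply Rpower_le1_a; lra).
    unfold Rdiv. assert (0 < / (p+1)) by (apply Rinv_0_lt_compat; lra). split.
    - apply Rmult_le_pos; nra.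
    - apply Rmult_le_compat_r; nra. }
  assert (HG1 : forall t, 1 <= t -> 0 <= - G1 t <= C2 / (- q - 1)).
  { intros t Ht. unfold G1. assert (0 < Rpower t (q+1)) by apply Rpower_pos.
    assert (Rpower t (q+1) <= 1) by (apply Rpower_le1_b; lra).
    replace (- (C2 * Rpower t (q + 1) / (q + 1))) with (C2 * Rpower t (q+1) / (- q - 1)) by (field; lra).
    unfold Rdiv. assert (0 < / (- q - 1)) by (apply Rinv_0_lt_compat; lra). split.
    - apply Rmult_le_pos; nra.
    - apply Rmult_le_compat_r; nra. }
  assert (Rabs (G0 1 - G0 u) <= C1 / (p+1)) by (apply abs_diff_le; apply HG0; lra).
  assert (Rabs (G1 v - G1 1) <= C2 / (- q - 1)).
  { replace (G1 v - G1 1) with ((- G1 1) - (- G1 v)) by ring. apply abs_diff_le; apply HG1; lra. }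
  assert (Rabs (RInt f u v) <= C1 / (p+1) + C2 / (- q - 1)).
  { rewrite Hch. eapply Rle_trans. apply Rabs_triang. lra. }
  replace l with (RInt f u v - (RInt f u v - l)) by ring.
  eapply Rle_trans. apply Rabs_triang. rewrite Rabs_Ropp. lra.
Qed.

Lemma exp_INR_mult (m : nat) (y : R) : exp (INR m * y) = exp y ^ m.
Proof.
  induction m. simpl. rewrite Rmult_0_l, exp_0. auto.
  rewrite S_INR. replace ((INR m + 1) * y) with (INR m * y + y) by ring.
  rewrite exp_plus, IHm. simpl. ring.
Qed.

Lemma pow_exp_bound (p c : R) : 0 < c -> exists K, 0 < K /\ forall t, 1 <= t -> Rpower t p * exp (- c * t) <= K.
Proof.
  intros Hc. destruct (INR_unbounded (Rmax p 1)) as [m Hm].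
  assert (Hm1 : 1 < INR m) by (generalize (Rmax_r p 1); lra).
  assert (Hmp : p < INR m) by (generalize (Rmax_l p 1); lra).
  exists ((INR m / c) ^ m + 1). split.
  { assert (0 <= (INR m / c) ^ m) by (apply pow_le; apply Rlt_le; apply Rdiv_lt_0_compat; lra). lra. }
  intros t Ht.
  assert (H1 : Rpower t p <= t ^ m) by (rewrite <- Rpower_pow by lra; apply Rle_Rpower; lra).
  assert (H2 : (c * t / INR m) ^ m <= exp (c * t)).
  { replace (c * t) with (INR m * (c * t / INR m)) at 2 by (field; lra).
    rewrite exp_INR_mult. apply pow_incr. split.
    apply Rlt_le, Rdiv_lt_0_compat; nra.
    generalize (exp_ineq1_le (c * t / INR m)); lra. }
  assert (H3 : t ^ m = (INR m / c) ^ m * (c * t / INR m) ^ m).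
  { rewrite <- Rpow_mult_distr. f_equal. field. lra. }
  assert (Hpos : 0 < (c * t / INR m) ^ m) by (apply pow_lt; apply Rdiv_lt_0_compat; nra).
  rewrite Ropp_mult_distr_l_reverse, exp_Ropp.
  assert (He : 0 < exp (c * t)) by apply exp_pos.
  apply Rle_trans with (t ^ m * / exp (c * t)).
  { apply Rmult_le_compat_r; auto. left; apply Rinv_0_lt_compat; auto. }
  apply Rle_trans with (t ^ m * / (c * t / INR m) ^ m).
  { apply Rmult_le_compat_l. apply pow_le; lra. apply Rinv_le_contravar; auto. }
  rewrite H3. rewrite Rmult_assoc, Rinv_r by lra. lra.
Qed.

Lemma exp_m1_bound (c : R) : Rabs (exp c - 1) <= Rabs c * exp (Rabs c).
Proof.
  destruct (Rle_dec 0 c) as [Hc|Hc].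
  - rewrite (Rabs_right c) by lra.
    assert (H1 := exp_ineq1_le (- c)). assert (H2 : exp (-c) * exp c = 1) by (rewrite <- exp_plus; replace (-c + c) with 0 by ring; apply exp_0).
    assert (H3 := exp_ineq1_le c).
    rewrite Rabs_right by lra. assert (0 < exp c) by apply exp_pos. nra.
  - rewrite (Rabs_left c) by lra.
    assert (H1 := exp_ineq1_le c). assert (0 < exp c) by apply exp_pos.
    assert (H3 := exp_ineq1_le (- c)).
    assert (exp c <= 1) by (rewrite <- exp_0; apply exp_le_exp; lra).
    rewrite Rabs_left1 by lra. nra.
Qed.

Lemma exp_taylor_bound (u : R) : Rabs (exp u - 1 - u) <= u ^ 2 * exp (Rabs u).
Proof.
  destruct (MVT_gen exp 0 u exp) as [c [Hc Heq]].
  - intros; apply is_derive_Reals, derivable_pt_lim_exp.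
  - intros; apply derivable_continuous_pt, derivable_pt_exp.
  - rewrite exp_0 in Heq.
    replace (exp u - 1 - u) with (u * (exp c - 1)) by (rewrite Heq; ring).
    assert (Hcu : Rabs c <= Rabs u).
    { destruct (Rle_dec 0 u).
      - rewrite Rmin_left, Rmax_right in Hc by lra. rewrite !Rabs_right by lra. lra.
      - rewrite Rmin_right, Rmax_left in Hc by lra. rewrite !Rabs_left1 by lra. lra. }
    rewrite Rabs_mult. eapply Rle_trans. apply Rmult_le_compat_l. apply Rabs_pos. apply exp_m1_bound.
    assert (exp (Rabs c) <= exp (Rabs u)) by (apply exp_le_exp; auto).
    assert (0 < exp (Rabs c)) by apply exp_pos.
    assert (Rabs u * (Rabs c * exp (Rabs c)) <= Rabs u * (Rabs u * exp (Rabs u))).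
    { apply Rmult_le_compat_l. apply Rabs_pos. apply Rmult_le_compat; auto using Rabs_pos; lra. }
    replace (u ^ 2) with (Rabs u * Rabs u). lra.
    rewrite <- Rabs_mult. simpl. rewrite Rmult_1_r. apply Rabs_right. nra.
Qed.

Lemma continuous_mul_R (f g : R -> R) (t : R) : continuous f t -> continuous g t -> continuous (fun t => f t * g t) t.
Proof. intros Hf Hg. apply (continuous_mult (K:=R_AbsRing) f g t Hf Hg). Qed.

Lemma continuous_expm (x t : R) : continuous (fun t => exp (- x * t)) t.
Proof. refine (ex_derive_continuous _ _ _). auto_derive. auto. Qed.

Definition Lap (psi : R -> R) (x : R) : R :=
  RInt_gen (fun t => exp (- x * t) * psi t) (at_right 0) (Rbar_locally p_infty).

Lemma ex_lap (psi : R -> R) (p x : R) : -1 < p -> 0 < x ->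
  (forall t, 0 < t -> continuous psi t) ->
  (forall t, 0 < t -> Rabs (psi t) <= Rpower t p) ->
  ex_RInt_gen (fun t => exp (- x * t) * psi t) (at_right 0) (Rbar_locally p_infty).
Proof.
  intros Hp Hx Hc Hb.
  destruct (pow_exp_bound p (x/2)) as [K [HK HKb]]. lra.
  apply ex_gen with (p := p) (c := x/2) (C := K + 1); auto. lra.
  - intros t Ht. apply continuous_mul_R. apply continuous_expm. auto.
  - intros t Ht. rewrite Rabs_mult, Rabs_right by (left; apply exp_pos).
    assert (exp (- x * t) <= 1) by (rewrite <- exp_0; apply exp_le_exp; nra).
    assert (0 < Rpower t p) by apply Rpower_pos.
    specialize (Hb t (proj1 Ht)). assert (0 <= Rabs (psi t)) by apply Rabs_pos.
    assert (0 < exp (- x * t)) by apply exp_pos. nra.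
  - intros t Ht. rewrite Rabs_mult, Rabs_right by (left; apply exp_pos).
    specialize (Hb t ltac:(lra)). specialize (HKb t Ht).
    assert (E : exp (- x * t) = exp (- (x/2) * t) * exp (- (x/2) * t)) by (rewrite <- exp_plus; apply f_equal; field).
    rewrite E.
    assert (0 < exp (- (x/2) * t)) by apply exp_pos.
    assert (0 <= Rabs (psi t)) by apply Rabs_pos.
    assert (0 < Rpower t p) by apply Rpower_pos.
    apply Rle_trans with (exp (- (x / 2) * t) * exp (- (x / 2) * t) * Rpower t p).
    { apply Rmult_le_compat_l; nra. }
    nra.
Qed.

Lemma lap_correct (psi : R -> R) (p x : R) : -1 < p -> 0 < x ->
  (forall t, 0 < t -> continuous psi t) ->
  (forall t, 0 < t -> Rabs (psi t) <= Rpower t p) ->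
  is_RInt_gen (fun t => exp (- x * t) * psi t) (at_right 0) (Rbar_locally p_infty) (Lap psi x).
Proof.
  intros. apply (RInt_gen_correct (V:=R_CompleteNormedModule)). eapply ex_lap; eauto.
Qed.

Lemma Rpower_2 (t : R) : 0 < t -> Rpower t 2 = t ^ 2.
Proof. intros Ht. replace 2 with (INR 2) by (simpl; ring). apply Rpower_pow; auto. Qed.

Lemma deriv_lap (psi : R -> R) (p x : R) : -1 < p -> 0 < x ->
  (forall t, 0 < t -> continuous psi t) ->
  (forall t, 0 < t -> Rabs (psi t) <= Rpower t p) ->
  is_derive (Lap psi) x (- Lap (fun t => t * psi t) x).
Proof.
  intros Hp Hx Hc Hb.
  assert (Hc1 : forall t, 0 < t -> continuous (fun t => t * psi t) t).
  { intros t Ht. apply continuous_mul_R; auto. apply continuous_id. }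
  assert (Hb1 : forall t, 0 < t -> Rabs (t * psi t) <= Rpower t (p + 1)).
  { intros t Ht. rewrite Rpower_S by auto. rewrite Rabs_mult, Rabs_right by lra.
    specialize (Hb t Ht). nra. }
  set (g := fun t => t ^ 2 * Rabs (psi t)).
  assert (Hcg : forall t, 0 < t -> continuous g t).
  { intros t Ht. unfold g. apply continuous_mul_R.
    refine (ex_derive_continuous _ _ _). auto_derive. auto.
    apply continuous_Rabs_comp. auto. }
  assert (Hbg : forall t, 0 < t -> Rabs (g t) <= Rpower t (p + 2)).
  { intros t Ht. unfold g. rewrite Rpower_plus, Rpower_2 by auto.
    rewrite Rabs_mult, Rabs_Rabsolu, Rabs_right by (apply Rle_ge, pow_le; lra).
    specialize (Hb t Ht). assert (0 <= t ^ 2) by (apply pow_le; lra). nra. }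
  set (B := Lap g (x/2)).
  assert (HB : is_RInt_gen (fun t => exp (- (x/2) * t) * g t) (at_right 0) (Rbar_locally p_infty) B).
  { apply lap_correct with (p := p + 2); auto; lra. }
  apply is_derive_Reals. intros eps Heps.
  assert (Hd : 0 < Rmin (x/2) (eps / (Rabs B + 1))).
  { apply Rmin_glb_lt. lra. apply Rdiv_lt_0_compat; auto. generalize (Rabs_pos B); lra. }
  exists (mkposreal _ Hd). intros h Hh0 Hhd. simpl in Hhd.
  assert (Hh1 : Rabs h < x / 2) by (eapply Rlt_le_trans; [exact Hhd | apply Rmin_l]).
  assert (Hh2 : Rabs h < eps / (Rabs B + 1)) by (eapply Rlt_le_trans; [exact Hhd | apply Rmin_r]).
  assert (Hxh : 0 < x + h) by (generalize (Rabs_le_between' h 0 (Rabs h)); intros; apply Rabs_lt_between in Hh1; lra).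
  assert (L1 := lap_correct psi p (x + h) Hp Hxh Hc Hb).
  assert (L0 := lap_correct psi p x Hp Hx Hc Hb).
  assert (L2 := lap_correct (fun t => t * psi t) (p+1) x ltac:(lra) Hx Hc1 Hb1).
  assert (Hw := is_RInt_gen_plus _ _ _ _ (is_RInt_gen_scal _ (/ h) _ (is_RInt_gen_minus _ _ _ _ L1 L0)) L2).
  assert (Hg := is_RInt_gen_scal _ (Rabs h) _ HB).
  assert (Hle : F0 (fun ab => fst ab <= snd ab)).
  { apply F0_intro. exists 1, 1. split; [lra | intros; simpl; lra]. }
  assert (Hpt : F0 (fun ab => forall t, fst ab <= t <= snd ab ->
     Rabs (/ h * (exp (- (x + h) * t) * psi t + - (exp (- x * t) * psi t)) + exp (- x * t) * (t * psi t))
      <= Rabs h * (exp (- (x / 2) * t) * g t))).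
  { apply F0_intro. exists 1, 1. split. lra. intros u v Hu Hv t Ht. simpl in Ht.
    assert (Htp : 0 < t) by lra.
    replace (/ h * (exp (- (x + h) * t) * psi t + - (exp (- x * t) * psi t)) + exp (- x * t) * (t * psi t))
      with (psi t * exp (- x * t) * (exp (- h * t) - 1 - (- h * t)) / h).
    2: { replace (- (x + h) * t) with (- x * t + - h * t) by ring. rewrite exp_plus. field. auto. }
    unfold Rdiv. rewrite !Rabs_mult, Rabs_Rinv by auto. rewrite (Rabs_right (exp _)) by (left; apply exp_pos).
    assert (HT := exp_taylor_bound (- h * t)).
    assert (Habs : Rabs (- h * t) = Rabs h * t) by (rewrite Rabs_mult, Rabs_Ropp, (Rabs_right t) by lra; ring).
    rewrite Habs in HT.
    assert (Hhp : 0 < Rabs h) by (apply Rabs_pos_lt; auto).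
    assert (Hexp : exp (- x * t) * exp (Rabs h * t) <= exp (- (x / 2) * t)).
    { rewrite <- exp_plus. apply exp_le_exp. nra. }
    assert (Hsq : (- h * t) ^ 2 = Rabs h * Rabs h * t ^ 2).
    { rewrite <- Rabs_mult. rewrite Rabs_right by nra. ring. }
    rewrite Hsq in HT. unfold g.
    assert (0 <= Rabs (psi t)) by apply Rabs_pos.
    assert (0 < exp (- x * t)) by apply exp_pos.
    assert (0 < exp (Rabs h * t)) by apply exp_pos.
    assert (0 <= t ^ 2) by (apply pow_le; lra).
    apply Rmult_le_reg_r with (r := Rabs h). auto.
    rewrite Rmult_assoc, Rinv_l by lra. rewrite Rmult_1_r.
    apply Rle_trans with (Rabs (psi t) * exp (- x * t) * (Rabs h * Rabs h * t ^ 2 * exp (Rabs h * t))).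
    { apply Rmult_le_compat_l; nra. }
    assert (Rabs (psi t) * t ^ 2 * (exp (- x * t) * exp (Rabs h * t)) <= Rabs (psi t) * t ^ 2 * exp (- (x / 2) * t)).
    { apply Rmult_le_compat_l; nra. }
    nra. }
  match type of Hw with is_RInt_gen ?f _ _ ?lf =>
    match type of Hg with is_RInt_gen ?gg _ _ ?lg =>
      assert (Hn' := @RInt_gen_norm R_CompleteNormedModule (at_right 0) (Rbar_locally p_infty) _ _ f gg lf lg Hle Hpt Hw Hg)
  end end.
  change (Rabs (/ h * (Lap psi (x + h) + - Lap psi x) + Lap (fun t => t * psi t) x) <= Rabs h * B) in Hn'.
    replace ((Lap psi (x + h) - Lap psi x) / h - - Lap (fun t => t * psi t) x)
      with (/ h * (Lap psi (x + h) + - Lap psi x) + Lap (fun t => t * psi t) x) by (field; auto).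
    eapply Rle_lt_trans. exact Hn'.
    assert (Rabs h * B <= Rabs h * Rabs B) by (apply Rmult_le_compat_l; [apply Rabs_pos | apply Rle_abs]).
    assert (Rabs h * Rabs B <= eps / (Rabs B + 1) * Rabs B) by (apply Rmult_le_compat_r; [apply Rabs_pos | lra]).
    assert (eps / (Rabs B + 1) * Rabs B < eps).
    { generalize (Rabs_pos B); intros. apply Rmult_lt_reg_r with (r := Rabs B + 1). lra.
      field_simplify; lra. }
    lra.
Qed.

Definition psi0 (a b t : R) : R := Rpower t (a - 1) * Rpower (1 + t) (b - 1).
Definition psi1 (a b t : R) : R := t * psi0 a b t.
Definition psi2 (a b t : R) : R := t * psi1 a b t.

Lemma psi0_cont (a b t : R) : 0 < t -> continuous (psi0 a b) t.
Proof.
  intros Ht. unfold psi0. apply continuous_mul_R. apply continuous_Rpower; auto.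
  apply (continuous_comp (fun t => 1 + t) (fun s => Rpower s (b - 1))).
  refine (ex_derive_continuous _ _ _). auto_derive. auto.
  apply continuous_Rpower. lra.
Qed.

Lemma psi0_bound (a b t : R) : b <= 1 -> 0 < t -> Rabs (psi0 a b t) <= Rpower t (a - 1).
Proof.
  intros Hb Ht. unfold psi0. rewrite Rabs_mult, !Rabs_right by (left; apply Rpower_pos).
  assert (Rpower (1 + t) (b - 1) <= 1) by (apply Rpower_le1_b; lra).
  assert (0 < Rpower t (a - 1)) by apply Rpower_pos. nra.
Qed.

Lemma psi1_cont (a b t : R) : 0 < t -> continuous (psi1 a b) t.
Proof. intros Ht. apply continuous_mul_R. apply continuous_id. apply psi0_cont; auto. Qed.

Lemma psi2_cont (a b t : R) : 0 < t -> continuous (psi2 a b) t.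
Proof. intros Ht. apply continuous_mul_R. apply continuous_id. apply psi1_cont; auto. Qed.

Lemma psi1_bound (a b t : R) : b <= 1 -> 0 < t -> Rabs (psi1 a b t) <= Rpower t a.
Proof.
  intros Hb Ht. unfold psi1. replace a with (a - 1 + 1) at 2 by ring.
  rewrite Rpower_S by auto. rewrite Rabs_mult, (Rabs_right t) by lra.
  assert (H := psi0_bound a b t Hb Ht). nra.
Qed.

Lemma psi2_bound (a b t : R) : b <= 1 -> 0 < t -> Rabs (psi2 a b t) <= Rpower t (a + 1).
Proof.
  intros Hb Ht. unfold psi2.
  rewrite Rpower_S by auto. rewrite Rabs_mult, (Rabs_right t) by lra.
  assert (H := psi1_bound a b t Hb Ht). nra.
Qed.

Lemma deriv_L0 (a b x : R) : 0 < a -> b <= 1 -> 0 < x ->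
  is_derive (Lap (psi0 a b)) x (- Lap (psi1 a b) x).
Proof.
  intros Ha Hb Hx. apply (deriv_lap (psi0 a b) (a - 1) x). lra. auto.
  apply psi0_cont. intros; apply psi0_bound; auto.
Qed.

Lemma deriv_L1 (a b x : R) : 0 < a -> b <= 1 -> 0 < x ->
  is_derive (Lap (psi1 a b)) x (- Lap (psi2 a b) x).
Proof.
  intros Ha Hb Hx. apply (deriv_lap (psi1 a b) a x). lra. auto.
  apply psi1_cont. intros; apply psi1_bound; auto.
Qed.

Lemma L0_correct (a b x : R) : 0 < a -> b <= 1 -> 0 < x ->
  is_RInt_gen (fun t => exp (- x * t) * psi0 a b t) (at_right 0) (Rbar_locally p_infty) (Lap (psi0 a b) x).
Proof. intros. apply lap_correct with (p := a - 1); auto. lra. apply psi0_cont. intros; apply psi0_bound; auto. Qed.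

Lemma L1_correct (a b x : R) : 0 < a -> b <= 1 -> 0 < x ->
  is_RInt_gen (fun t => exp (- x * t) * psi1 a b t) (at_right 0) (Rbar_locally p_infty) (Lap (psi1 a b) x).
Proof. intros. apply lap_correct with (p := a); auto. lra. apply psi1_cont. intros; apply psi1_bound; auto. Qed.

Lemma L2_correct (a b x : R) : 0 < a -> b <= 1 -> 0 < x ->
  is_RInt_gen (fun t => exp (- x * t) * psi2 a b t) (at_right 0) (Rbar_locally p_infty) (Lap (psi2 a b) x).
Proof. intros. apply lap_correct with (p := a + 1); auto. lra. apply psi2_cont. intros; apply psi2_bound; auto. Qed.

Lemma Rpower_pred (t p : R) : 0 < t -> Rpower t p = Rpower t (p - 1) * t.
Proof. intros Ht. replace p with (p - 1 + 1) at 1 by ring. apply Rpower_S; auto. Qed.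

Lemma ibp_deriv (a b x t : R) : 0 < t ->
  is_derive (fun t => - (exp (- x * t) * Rpower t a * Rpower (1 + t) b)) t
    (x * (exp (- x * t) * psi2 a b t) - (a + b - x) * (exp (- x * t) * psi1 a b t) - a * (exp (- x * t) * psi0 a b t)).
Proof.
  intros Ht. auto_derive.
  - split. apply ex_derive_Rpower; auto. split; auto. apply ex_derive_Rpower; lra.
  - rewrite Derive_Rpower by auto. rewrite Derive_Rpower by lra.
    unfold psi2, psi1, psi0.
    rewrite (Rpower_pred t a) by auto. rewrite (Rpower_pred (1 + t) b) by lra.
    ring.
Qed.

Lemma mul_le_1 (A Q : R) : 0 <= A -> Q <= 1 -> A * Q <= A.
Proof. intros. nra. Qed.

Lemma cont_sub_R (f g : R -> R) (t : R) : continuous f t -> continuous g t -> continuous (fun t => f t - g t) t.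
Proof. intros Hf Hg. apply (continuous_minus (V:=R_NormedModule) f g t Hf Hg). Qed.

Lemma cont_scal_R (c : R) (f : R -> R) (t : R) : continuous f t -> continuous (fun t => c * f t) t.
Proof. intros Hf. apply continuous_mul_R; auto. apply continuous_const. Qed.

Lemma ibp (a b x : R) : 0 < a -> b <= 0 -> 0 < x ->
  x * Lap (psi2 a b) x - (a + b - x) * Lap (psi1 a b) x - a * Lap (psi0 a b) x = 0.
Proof.
  intros Ha Hb Hx.
  set (Fn := fun t => exp (- x * t) * Rpower t a * Rpower (1 + t) b).
  set (h := fun t => x * (exp (- x * t) * psi2 a b t) - (a + b - x) * (exp (- x * t) * psi1 a b t) - a * (exp (- x * t) * psi0 a b t)).
  assert (Hb1 : b <= 1) by lra.
  assert (Hval : is_RInt_gen h (at_right 0) (Rbar_locally p_infty)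
     (x * Lap (psi2 a b) x - (a + b - x) * Lap (psi1 a b) x - a * Lap (psi0 a b) x)).
  { assert (H := is_RInt_gen_minus _ _ _ _
       (is_RInt_gen_minus _ _ _ _ (is_RInt_gen_scal _ x _ (L2_correct a b x Ha Hb1 Hx))
                                  (is_RInt_gen_scal _ (a + b - x) _ (L1_correct a b x Ha Hb1 Hx)))
       (is_RInt_gen_scal _ a _ (L0_correct a b x Ha Hb1 Hx))).
    eapply is_RInt_gen_ext. 2: exact H.
    apply F0_intro. exists 1, 1. split. lra. intros; reflexivity. }
  assert (Hcont : forall t, 0 < t -> continuous h t).
  { intros t Ht. unfold h. apply cont_sub_R. apply cont_sub_R.
    - apply cont_scal_R. apply continuous_mul_R. apply continuous_expm. apply psi2_cont; auto.
    - apply cont_scal_R. apply continuous_mul_R. apply continuous_expm. apply psi1_cont; auto.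
    - apply cont_scal_R. apply continuous_mul_R. apply continuous_expm. apply psi0_cont; auto. }
  assert (HRI : forall u v, 0 < u -> 0 < v -> RInt h u v = Fn u - Fn v).
  { intros u v Hu Hv.
    assert (H := is_RInt_derive (V:=R_CompleteNormedModule) (fun t => - Fn t) h u v).
    assert (H1 : forall t, Rmin u v <= t <= Rmax u v -> is_derive (fun t => - Fn t) t (h t)).
    { intros t Ht. apply ibp_deriv. assert (0 < Rmin u v) by (apply Rmin_glb_lt; lra). lra. }
    assert (H2 : forall t, Rmin u v <= t <= Rmax u v -> continuous h t).
    { intros t Ht. apply Hcont. assert (0 < Rmin u v) by (apply Rmin_glb_lt; lra). lra. }
    rewrite (is_RInt_unique _ _ _ _ (H H1 H2)). change (- Fn v - - Fn u = Fn u - Fn v). ring. }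
  assert (Hzero : is_RInt_gen h (at_right 0) (Rbar_locally p_infty) 0).
  { apply is_RInt_gen_lim.
    - apply F0_intro. exists 1, 1. split. lra. intros u v Hu Hv. simpl.
      apply (ex_RInt_continuous (V:=R_CompleteNormedModule)). intros z Hz. apply Hcont.
      assert (0 < Rmin u v) by (apply Rmin_glb_lt; lra). lra.
    - intros P [eps HP]. unfold filtermap.
      destruct (pow_exp_bound a (x/2)) as [K [HK HKb]]. lra.
      destruct (small_pow a (eps/2)) as [d [Hd Hda]]. auto. destruct eps; simpl; lra.
      destruct (big_exp (x/2) (eps/(2*K))) as [M [HM HMe]]. lra.
      { apply Rdiv_lt_0_compat. destruct eps; simpl; lra. lra. }
      apply F0_intro. exists d, M. split. lra. intros u v Hu Hv. simpl.
      apply HP. apply ballR. rewrite HRI by lra. rewrite Rminus_0_r.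
      assert (B1 : Rabs (Fn u) < eps / 2).
      { unfold Fn. rewrite !Rabs_mult, !Rabs_right by (left; try apply exp_pos; apply Rpower_pos).
        assert (exp (- x * u) <= 1) by (rewrite <- exp_0; apply exp_le_exp; nra).
        assert (Rpower (1 + u) b <= 1) by (apply Rpower_le1_b; lra).
        assert (Rpower u a <= Rpower d a) by (apply Rpower_le_base; lra).
        assert (0 < exp (- x * u)) by apply exp_pos.
        assert (0 < Rpower u a) by apply Rpower_pos.
        assert (0 < Rpower (1 + u) b) by apply Rpower_pos.
        assert (exp (- x * u) * Rpower u a <= Rpower u a) by nra.
        assert (exp (- x * u) * Rpower u a * Rpower (1 + u) b <= exp (- x * u) * Rpower u a) by (apply mul_le_1; nra).
        lra. }
      assert (B2 : Rabs (Fn v) < eps / 2).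
      { unfold Fn. rewrite !Rabs_mult, !Rabs_right by (left; try apply exp_pos; apply Rpower_pos).
        assert (Rpower (1 + v) b <= 1) by (apply Rpower_le1_b; lra).
        specialize (HKb v ltac:(lra)). specialize (HMe v ltac:(lra)).
        assert (E : exp (- x * v) = exp (- (x/2) * v) * exp (- (x/2) * v)) by (rewrite <- exp_plus; apply f_equal; field).
        assert (0 < exp (- (x/2) * v)) by apply exp_pos.
        assert (0 < Rpower v a) by apply Rpower_pos.
        assert (0 < Rpower (1 + v) b) by apply Rpower_pos.
        assert (HH : exp (- x * v) * Rpower v a <= K * exp (- (x/2) * v)).
        { rewrite E. nra. }
        assert (K * exp (- (x / 2) * v) < K * (eps / (2 * K))) by (apply Rmult_lt_compat_l; lra).
        replace (K * (eps / (2 * K))) with (eps / 2) in * by (field; lra).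
        assert (0 < exp (- x * v) * Rpower v a) by (apply Rmult_lt_0_compat; auto; apply exp_pos).
        assert (exp (- x * v) * Rpower v a * Rpower (1 + v) b <= exp (- x * v) * Rpower v a) by (apply mul_le_1; nra).
        lra. }
      eapply Rle_lt_trans. unfold Rminus. eapply Rle_trans. apply Rabs_triang. rewrite Rabs_Ropp. apply Rle_refl. destruct eps; simpl in *; lra. }
  rewrite <- (is_RInt_gen_unique (V:=R_CompleteNormedModule) _ _ Hval).
  apply (is_RInt_gen_unique (V:=R_CompleteNormedModule) _ _ Hzero).
Qed.

Definition coefA (al be : R) (k : nat) : R := poch be k / poch al k / INR (fact k).

Lemma poch_pos (x : R) (k : nat) : 0 < x -> 0 < poch x k.
Proof.
  intros Hx. induction k; simpl. lra.
  apply Rmult_lt_0_compat; auto. generalize (pos_INR k); lra.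
Qed.

Lemma coefA_rec (al be : R) (k : nat) : 0 < al ->
  coefA al be (S k) * (INR (S k) * (al + INR k)) = coefA al be k * (be + INR k).
Proof.
  intros Hal. unfold coefA. simpl poch. rewrite fact_simpl, mult_INR.
  assert (0 < poch al k) by (apply poch_pos; auto).
  assert (INR (fact k) <> 0) by apply INR_fact_neq_0.
  assert (0 < al + INR k) by (generalize (pos_INR k); lra).
  assert (INR (S k) <> 0) by (apply not_0_INR; lia).
  field. repeat split; lra.
Qed.

Lemma coefA_bound (al be : R) (k : nat) : 0 < al ->
  Rabs (coefA al be k) <= (Rmax 1 (Rabs be / al)) ^ k / INR (fact k).
Proof.
  intros Hal. set (Mc := Rmax 1 (Rabs be / al)).
  assert (HMc1 : 1 <= Mc) by apply Rmax_l.
  assert (HMc2 : Rabs be / al <= Mc) by apply Rmax_r.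
  induction k.
  - replace (coefA al be 0) with 1 by (unfold coefA; simpl; field). simpl. rewrite Rabs_R1. lra.
  - assert (Hr := coefA_rec al be k Hal).
    assert (Hpos : 0 < INR (S k) * (al + INR k)).
    { apply Rmult_lt_0_compat. apply lt_0_INR; lia. generalize (pos_INR k); lra. }
    assert (E : coefA al be (S k) = coefA al be k * (be + INR k) / (INR (S k) * (al + INR k))).
    { rewrite <- Hr. field. assert (0 < INR (S k)) by (apply lt_0_INR; lia). generalize (pos_INR k); split; lra. }
    rewrite E. unfold Rdiv at 1. rewrite !Rabs_mult, Rabs_Rinv, (Rabs_right (INR (S k) * _)) by lra.
    assert (Hb : Rabs (be + INR k) <= Mc * (al + INR k)).
    { eapply Rle_trans. apply Rabs_triang. rewrite (Rabs_right (INR k)) by (apply Rle_ge, pos_INR).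
      assert (Rabs be <= Mc * al).
      { apply Rmult_le_compat_r with (r := al) in HMc2; [|lra]. unfold Rdiv in HMc2.
        rewrite Rmult_assoc, Rinv_l, Rmult_1_r in HMc2 by lra. lra. }
      generalize (pos_INR k); nra. }
    rewrite fact_simpl, mult_INR. simpl pow.
    assert (0 < INR (fact k)) by apply INR_fact_lt_0.
    assert (0 < INR (S k)) by (apply lt_0_INR; lia).
    assert (0 < al + INR k) by (generalize (pos_INR k); lra).
    apply Rle_trans with (Mc ^ k / INR (fact k) * (Mc * (al + INR k)) * / (INR (S k) * (al + INR k))).
    { apply Rmult_le_compat_r. left; apply Rinv_0_lt_compat; lra.
      apply Rmult_le_compat; auto using Rabs_pos. }
    right. field. split; lra.
Qed.

Lemma sum_ge_term (f : nat -> R) (n : nat) : (forall k, 0 <= f k) -> f n <= sum_f_R0 f n.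
Proof.
  intros Hf. destruct n. simpl. lra. simpl.
  assert (0 <= sum_f_R0 f n). { apply cond_pos_sum. auto. } specialize (Hf (S n)). lra.
Qed.

Lemma coefA_CV (al be y : R) : 0 < al -> Rbar_lt (Rabs y) (CV_radius (coefA al be)).
Proof.
  intros Hal. set (Mc := Rmax 1 (Rabs be / al)).
  assert (HMc1 : 1 <= Mc) by apply Rmax_l.
  destruct (CV_radius_bounded (coefA al be)) as [Hub _].
  assert (H : Rbar_le (Rabs y + 1) (CV_radius (coefA al be))).
  { apply Hub. exists (exp (Mc * (Rabs y + 1))). intros n.
    set (r := Rabs y + 1). assert (Hr : 0 < r) by (unfold r; generalize (Rabs_pos y); lra).
    rewrite Rabs_mult, <- RPow_abs, (Rabs_right r) by lra.
    eapply Rle_trans. apply Rmult_le_compat_r. apply pow_le; lra. apply coefA_bound; auto.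
    eapply Rle_trans. 2: apply (exp_ge_taylor (Mc * r) n). 2: nra.
    eapply Rle_trans. 2: apply sum_ge_term.
    - rewrite Rpow_mult_distr. unfold Mc. unfold Rdiv. right; ring.
    - intros k. apply Rmult_le_pos. apply pow_le; nra. left; apply Rinv_0_lt_compat, INR_fact_lt_0. }
  destruct (CV_radius (coefA al be)) as [c| |]; simpl in *; auto; lra.
Qed.

Lemma series_ode (al be y : R) : 0 < al ->
  y * PSeries (PS_derive (PS_derive (coefA al be))) y + al * PSeries (PS_derive (coefA al be)) y
  - y * PSeries (PS_derive (coefA al be)) y - be * PSeries (coefA al be) y = 0.
Proof.
  intros Hal.
  set (A := coefA al be). set (A1 := PS_derive A). set (A2 := PS_derive A1).
  assert (C0 : Rbar_lt (Rabs y) (CV_radius A)) by apply coefA_CV, Hal.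
  assert (C1 : Rbar_lt (Rabs y) (CV_radius A1)) by (unfold A1; rewrite CV_radius_derive; auto).
  assert (C2 : Rbar_lt (Rabs y) (CV_radius A2)) by (unfold A2; rewrite CV_radius_derive; auto).
  assert (E0 := CV_radius_inside _ _ C0).
  assert (E1 := CV_radius_inside _ _ C1).
  assert (E2 := CV_radius_inside _ _ C2).
  assert (Hm : mult y al = mult al y) by (apply Rmult_comm).
  assert (Hm' : mult y be = mult be y) by (apply Rmult_comm).
  assert (X1 : ex_pseries (PS_incr_1 A2) y) by (apply ex_pseries_incr_1; auto).
  assert (X2 : ex_pseries (PS_scal al A1) y) by (apply ex_pseries_scal; auto).
  assert (X3 : ex_pseries (PS_incr_1 A1) y) by (apply ex_pseries_incr_1; auto).
  assert (X4 : ex_pseries (PS_scal be A) y) by (apply ex_pseries_scal; auto).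
  assert (X5 : ex_pseries (PS_plus (PS_incr_1 A2) (PS_scal al A1)) y) by (apply ex_pseries_plus; auto).
  assert (X6 : ex_pseries (PS_minus (PS_plus (PS_incr_1 A2) (PS_scal al A1)) (PS_incr_1 A1)) y).
  { unfold PS_minus. apply ex_pseries_plus; auto. apply ex_pseries_opp; auto. }
  transitivity (PSeries (PS_minus (PS_minus (PS_plus (PS_incr_1 A2) (PS_scal al A1)) (PS_incr_1 A1)) (PS_scal be A)) y).
  { rewrite PSeries_minus, PSeries_minus, PSeries_plus, !PSeries_incr_1, !PSeries_scal; auto. }
  rewrite <- (PSeries_const_0 y). apply PSeries_ext. intros n.
  unfold PS_minus, PS_plus, PS_scal, A2, A1, PS_derive. destruct n.
  - simpl PS_incr_1. assert (Hr := coefA_rec al be 0 Hal). fold A in Hr.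
    change (0 + al * (INR 1 * A 1%nat) + - 0 + - (be * A 0%nat) = 0).
    simpl INR in *. rewrite Rplus_0_r in Hr. rewrite Rplus_0_r in Hr. lra.
  - simpl PS_incr_1. assert (Hr := coefA_rec al be (S n) Hal). fold A in Hr.
    change (INR (S n) * (INR (S (S n)) * A (S (S n))) + al * (INR (S (S n)) * A (S (S n))) + - (INR (S n) * A (S n)) + - (be * A (S n)) = 0).
    transitivity (A (S (S n)) * (INR (S (S n)) * (al + INR (S n))) - A (S n) * (be + INR (S n))).
    ring. rewrite Hr. ring.
Qed.

Lemma gamma_correct (al : R) : 0 < al ->
  is_RInt_gen (fun t => Rpower t (al - 1) * exp (- t)) (at_right 0) (Rbar_locally p_infty) (Gamma_pos al).
Proof.
  intros Hal.
  assert (H := lap_correct (fun t => Rpower t (al - 1)) (al - 1) 1 ltac:(lra) ltac:(lra)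
     (fun t Ht => continuous_Rpower t (al - 1) Ht)
     (fun t Ht => Req_le _ _ (Rabs_right _ (Rle_ge _ _ (Rlt_le _ _ (Rpower_pos t (al - 1))))))).
  assert (H2 : is_RInt_gen (fun t => Rpower t (al - 1) * exp (- t)) (at_right 0) (Rbar_locally p_infty)
               (Lap (fun t => Rpower t (al - 1)) 1)).
  { eapply is_RInt_gen_ext. 2: exact H. apply F0_intro. exists 1, 1. split. lra.
    intros u v Hu Hv; simpl; intros t Ht. replace (- (1) * t) with (- t) by ring. ring. }
  unfold Gamma_pos. rewrite (is_RInt_gen_unique (V:=R_CompleteNormedModule) _ _ H2). exact H2.
Qed.

Lemma gamma_scale (al x : R) : 0 < al -> 0 < x ->
  is_RInt_gen (fun t => exp (- x * t) * Rpower t (al - 1)) (at_right 0) (Rbar_locally p_infty)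
    (Rpower x (- al) * Gamma_pos al).
Proof.
  intros Hal Hx.
  set (g := fun t => Rpower t (al - 1) * exp (- t)).
  set (f := fun t => exp (- x * t) * Rpower t (al - 1)).
  destruct (is_RInt_gen_lim_inv g _ (gamma_correct al Hal)) as [Hexg Hlimg].
  assert (Hcf : forall t, 0 < t -> continuous f t).
  { intros t Ht. apply continuous_mul_R. apply continuous_expm. apply continuous_Rpower; auto. }
  assert (Hcg : forall t, 0 < t -> continuous g t).
  { intros t Ht. apply continuous_mul_R. apply continuous_Rpower; auto.
    refine (ex_derive_continuous _ _ _). auto_derive. auto. }
  assert (Hxa : 0 < Rpower x (- al)) by apply Rpower_pos.
  assert (Hsub : forall u v, 0 < u -> 0 < v -> RInt f u v = Rpower x (- al) * RInt g (x * u) (x * v)).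
  { intros u v Hu Hv.
    assert (Hexg' : ex_RInt g (x * u + 0) (x * v + 0)).
    { apply (ex_RInt_continuous (V:=R_CompleteNormedModule)). intros z Hz. apply Hcg.
      assert (0 < Rmin (x * u + 0) (x * v + 0)) by (apply Rmin_glb_lt; nra). lra. }
    replace (x * u) with (x * u + 0) by ring. replace (x * v) with (x * v + 0) by ring.
    rewrite <- (RInt_comp_lin (V:=R_CompleteNormedModule) g x 0 u v Hexg').
    rewrite <- (RInt_scal (V:=R_CompleteNormedModule)).
    2: { apply (ex_RInt_continuous (V:=R_CompleteNormedModule)). intros z Hz.
         assert (0 < Rmin u v) by (apply Rmin_glb_lt; nra).
         apply (continuous_mul_R (fun _ => x) (fun y => g (x * y + 0))). apply continuous_const.
         apply (continuous_comp (fun y => x * y + 0) g).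
         refine (ex_derive_continuous _ _ _). auto_derive. auto. apply Hcg. nra. }
    apply RInt_ext. intros t Ht.
    assert (0 < Rmin u v) by (apply Rmin_glb_lt; nra). assert (Htp : 0 < t) by lra.
    unfold f, g. change (exp (- x * t) * Rpower t (al - 1) = Rpower x (- al) * (x * (Rpower (x * t + 0) (al - 1) * exp (- (x * t + 0))))).
    rewrite Rplus_0_r. rewrite <- Rpower_mult_distr by auto.
    replace (- (x * t)) with (- x * t) by ring.
    assert (E : Rpower x (- al) * x * Rpower x (al - 1) = 1).
    { rewrite Rmult_assoc. rewrite <- (Rpower_1 x) at 2 by auto. rewrite <- Rpower_plus, <- Rpower_plus.
      replace (- al + (1 + (al - 1))) with 0 by ring. apply Rpower_O; auto. }
    transitivity ((Rpower x (- al) * x * Rpower x (al - 1)) * (exp (- x * t) * Rpower t (al - 1))).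
    rewrite E; ring. ring. }
  apply is_RInt_gen_lim.
  - apply F0_intro. exists 1, 1. split. lra. intros u v Hu Hv. simpl.
    apply (ex_RInt_continuous (V:=R_CompleteNormedModule)). intros z Hz. apply Hcf.
    assert (0 < Rmin u v) by (apply Rmin_glb_lt; lra). lra.
  - intros P [eps HP]. unfold filtermap.
    set (e := eps / Rpower x (- al)).
    assert (He : 0 < e) by (apply Rdiv_lt_0_compat; auto; apply cond_pos).
    assert (HL := Hlimg (fun y => Rabs (y - Gamma_pos al) < e) ltac:(exists (mkposreal e He); intros y Hy; apply ballR in Hy; exact Hy)).
    unfold filtermap in HL. destruct (F0_elim _ HL) as [d [M [Hd HdM]]].
    apply F0_intro. exists (d / x), (Rmax M 1 / x). split. apply Rdiv_lt_0_compat; auto.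
    intros u v Hu Hv. simpl. apply HP. apply ballR.
    assert (Hu' : 0 < x * u < d).
    { destruct Hu as [Hu1 Hu2]. split. nra. apply Rmult_lt_compat_l with (r := x) in Hu2; [|auto].
      replace (x * (d / x)) with d in Hu2 by (field; lra). lra. }
    assert (Hv' : M < x * v).
    { apply Rmult_lt_compat_l with (r := x) in Hv; [|auto]. replace (x * (Rmax M 1 / x)) with (Rmax M 1) in Hv by (field; lra).
      generalize (Rmax_l M 1); lra. }
    assert (0 < v).
    { assert (0 < Rmax M 1 / x) by (apply Rdiv_lt_0_compat; auto; generalize (Rmax_r M 1); lra). lra. }
    rewrite Hsub by lra. specialize (HdM _ _ Hu' Hv'). simpl in HdM.
    replace (Rpower x (- al) * RInt g (x * u) (x * v) - Rpower x (- al) * Gamma_pos al)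
      with (Rpower x (- al) * (RInt g (x * u) (x * v) - Gamma_pos al)) by ring.
    rewrite Rabs_mult, (Rabs_right (Rpower x _)) by lra.
    apply Rmult_lt_compat_l with (r := Rpower x (- al)) in HdM; auto.
    unfold e in HdM. replace (Rpower x (- al) * (eps / Rpower x (- al))) with (pos eps) in HdM by (field; lra). lra.
Qed.

Lemma Rpower_le_base_neg (s w e : R) : 0 < s <= w -> e <= 0 -> Rpower w e <= Rpower s e.
Proof.
  intros Hs He. unfold Rpower. apply exp_le_exp.
  assert (ln s <= ln w) by (apply ln_le_mono; lra). nra.
Qed.

Lemma ln_1p_le (u : R) : 0 < u -> ln (1 + u) <= u.
Proof.
  intros Hu. rewrite <- (ln_exp u) at 2. apply ln_le_mono. lra. apply exp_ineq1_le.
Qed.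

Lemma L0_bound (a b x : R) : 0 < a -> b <= 0 -> a + b < 1 -> 0 < x ->
  Rabs (Lap (psi0 a b) x) <= 1 / a + 1 / (1 - (a + b)).
Proof.
  intros Ha Hb Hab Hx.
  assert (H := bound_gen _ _ (a - 1) (a + b - 2) 1 1 ltac:(lra) ltac:(lra) (L0_correct a b x Ha ltac:(lra) Hx)).
  replace (1 / a + 1 / (1 - (a + b))) with (1 / (a - 1 + 1) + 1 / (- (a + b - 2) - 1)) by (replace (a - 1 + 1) with a by ring; replace (- (a + b - 2) - 1) with (1 - (a + b)) by ring; reflexivity).
  apply H.
  - intros t Ht. apply continuous_mul_R. apply continuous_expm. apply psi0_cont; auto.
  - intros t Ht. rewrite Rabs_mult, Rabs_right by (left; apply exp_pos).
    assert (exp (- x * t) <= 1) by (rewrite <- exp_0; apply exp_le_exp; nra).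
    assert (Hp := psi0_bound a b t ltac:(lra) (proj1 Ht)).
    assert (0 <= Rabs (psi0 a b t)) by apply Rabs_pos. assert (0 < exp (- x * t)) by apply exp_pos. nra.
  - intros t Ht. rewrite Rabs_mult, Rabs_right by (left; apply exp_pos).
    assert (exp (- x * t) <= 1) by (rewrite <- exp_0; apply exp_le_exp; nra).
    assert (Hp : Rabs (psi0 a b t) <= Rpower t (a + b - 2)).
    { unfold psi0. rewrite Rabs_mult, !Rabs_right by (left; apply Rpower_pos).
      replace (a + b - 2) with ((a - 1) + (b - 1)) by ring. rewrite Rpower_plus.
      apply Rmult_le_compat_l. left; apply Rpower_pos. apply Rpower_le_base_neg; lra. }
    assert (0 <= Rabs (psi0 a b t)) by apply Rabs_pos. assert (0 < exp (- x * t)) by apply exp_pos. nra.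
Qed.

Lemma diff_pt (b t : R) : b <= 0 -> 0 < t ->
  0 <= Rpower t (b - 1) - Rpower (1 + t) (b - 1) <= (1 - b) * Rpower t (b - 2).
Proof.
  intros Hb Ht. split.
  - assert (Rpower (1 + t) (b - 1) <= Rpower t (b - 1)) by (apply Rpower_le_base_neg; lra). lra.
  - assert (Hl : ln (1 + t) <= ln t + 1 / t).
    { replace (1 + t) with (t * (1 + 1 / t)) by (field; lra). rewrite ln_mult.
      apply Rplus_le_compat_l. apply ln_1p_le. apply Rdiv_lt_0_compat; lra. lra.
      assert (0 < 1 / t) by (apply Rdiv_lt_0_compat; lra). lra. }
    assert (E : Rpower (1 + t) (b - 1) = Rpower t (b - 1) * exp ((b - 1) * (ln (1 + t) - ln t))).
    { unfold Rpower. rewrite <- exp_plus. f_equal. ring. }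
    assert (Hx := exp_ineq1_le ((b - 1) * (ln (1 + t) - ln t))).
    assert (H2 : (b - 1) * (ln (1 + t) - ln t) >= (b - 1) * (1 / t)) by nra.
    assert (Hp : 0 < Rpower t (b - 1)) by apply Rpower_pos.
    assert (H3 : Rpower (1 + t) (b - 1) >= Rpower t (b - 1) * (1 + (b - 1) * (1 / t))).
    { rewrite E. apply Rle_ge. apply Rmult_le_compat_l; lra. }
    assert (H4 : Rpower t (b - 1) = Rpower t (b - 2) * t).
    { replace (b - 1) with (b - 2 + 1) by ring. apply Rpower_S; auto. }
    assert (H5 : Rpower t (b - 1) * (1 + (b - 1) * (1 / t)) = Rpower t (b - 1) + (b - 1) * Rpower t (b - 2)).
    { rewrite H4. field. lra. }
    lra.
Qed.

Lemma diff_bound (a b x : R) : 0 < a -> b <= 0 -> 0 < a + b -> a + b < 1 -> 0 < x ->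
  Rabs (Rpower x (- (a + b)) * Gamma_pos (a + b) - Lap (psi1 a b) x) <= 1 / (a + b) + (1 - b) / (1 - (a + b)).
Proof.
  intros Ha Hb Hab0 Hab Hx.
  assert (HI := is_RInt_gen_minus _ _ _ _ (gamma_scale (a + b) x Hab0 Hx) (L1_correct a b x Ha ltac:(lra) Hx)).
  assert (H := bound_gen _ _ (a + b - 1) (a + b - 2) 1 (1 - b) ltac:(lra) ltac:(lra) HI).
  replace (1 / (a + b) + (1 - b) / (1 - (a + b))) with (1 / (a + b - 1 + 1) + (1 - b) / (- (a + b - 2) - 1)) by (replace (a + b - 1 + 1) with (a + b) by ring; replace (- (a + b - 2) - 1) with (1 - (a + b)) by ring; reflexivity).
  apply H.
  - intros t Ht. apply (continuous_minus (V:=R_NormedModule)).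
    apply continuous_mul_R. apply continuous_expm. apply continuous_Rpower; auto.
    apply continuous_mul_R. apply continuous_expm. apply psi1_cont; auto.
  - intros t Ht. change (Rabs (exp (- x * t) * Rpower t (a + b - 1) - exp (- x * t) * psi1 a b t) <= 1 * Rpower t (a + b - 1)).
    assert (E : exp (- x * t) * Rpower t (a + b - 1) - exp (- x * t) * psi1 a b t =
                exp (- x * t) * Rpower t a * (Rpower t (b - 1) - Rpower (1 + t) (b - 1))).
    { unfold psi1, psi0. replace (a + b - 1) with (a + (b - 1)) by ring. rewrite Rpower_plus.
      rewrite (Rpower_pred t a) by lra. ring. }
    rewrite E. assert (D := diff_pt b t Hb (proj1 Ht)).
    assert (exp (- x * t) <= 1) by (rewrite <- exp_0; apply exp_le_exp; nra).
    assert (0 < exp (- x * t)) by apply exp_pos. assert (0 < Rpower t a) by apply Rpower_pos.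
    assert (Hle : Rpower t (b - 1) - Rpower (1 + t) (b - 1) <= Rpower t (b - 1)).
    { assert (0 < Rpower (1 + t) (b - 1)) by apply Rpower_pos. lra. }
    rewrite Rabs_right by (apply Rle_ge; apply Rmult_le_pos; [apply Rmult_le_pos|]; lra).
    replace (1 * Rpower t (a + b - 1)) with (Rpower t a * Rpower t (b - 1)) by (rewrite <- Rpower_plus; rewrite Rmult_1_l; replace (a + (b - 1)) with (a + b - 1) by ring; reflexivity).
    assert (Rpower t a * (Rpower t (b - 1) - Rpower (1 + t) (b - 1)) <= Rpower t a * Rpower t (b - 1)) by (apply Rmult_le_compat_l; lra).
    assert (0 <= Rpower t a * (Rpower t (b - 1) - Rpower (1 + t) (b - 1))) by (apply Rmult_le_pos; lra).
    nra.
  - intros t Ht. change (Rabs (exp (- x * t) * Rpower t (a + b - 1) - exp (- x * t) * psi1 a b t) <= (1 - b) * Rpower t (a + b - 2)).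
    assert (E : exp (- x * t) * Rpower t (a + b - 1) - exp (- x * t) * psi1 a b t =
                exp (- x * t) * Rpower t a * (Rpower t (b - 1) - Rpower (1 + t) (b - 1))).
    { unfold psi1, psi0. replace (a + b - 1) with (a + (b - 1)) by ring. rewrite Rpower_plus.
      rewrite (Rpower_pred t a) by lra. ring. }
    rewrite E. assert (D := diff_pt b t Hb ltac:(lra)).
    assert (exp (- x * t) <= 1) by (rewrite <- exp_0; apply exp_le_exp; nra).
    assert (0 < exp (- x * t)) by apply exp_pos. assert (0 < Rpower t a) by apply Rpower_pos.
    rewrite Rabs_right by (apply Rle_ge; apply Rmult_le_pos; [apply Rmult_le_pos|]; lra).
    replace ((1 - b) * Rpower t (a + b - 2)) with (Rpower t a * ((1 - b) * Rpower t (b - 2))) by (replace (a + b - 2) with (a + (b - 2)) by ring; rewrite Rpower_plus; ring).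
    assert (Rpower t a * (Rpower t (b - 1) - Rpower (1 + t) (b - 1)) <= Rpower t a * ((1 - b) * Rpower t (b - 2))) by (apply Rmult_le_compat_l; lra).
    assert (0 <= Rpower t a * (Rpower t (b - 1) - Rpower (1 + t) (b - 1))) by (apply Rmult_le_pos; lra).
    nra.
Qed.

Definition fs0 (al be x : R) : R := PSeries (coefA al be) (- x).
Definition fs1 (al be x : R) : R := - PSeries (PS_derive (coefA al be)) (- x).
Definition fs2 (al be x : R) : R := PSeries (PS_derive (PS_derive (coefA al be))) (- x).

Lemma fs0_derive (al be x : R) : 0 < al -> is_derive (fs0 al be) x (fs1 al be x).
Proof.
  intros Hal. unfold fs0, fs1.
  assert (H := is_derive_comp (PSeries (coefA al be)) (fun x => - x) x _ (-1)
     (is_derive_PSeries _ _ (coefA_CV al be (- x) Hal)) ltac:(auto_derive; auto; ring)).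
  eapply is_derive_eq. exact H. simpl. unfold scal; simpl; unfold mult; simpl. ring.
Qed.

Lemma fs1_derive (al be x : R) : 0 < al -> is_derive (fs1 al be) x (fs2 al be x).
Proof.
  intros Hal. unfold fs1, fs2.
  assert (C : Rbar_lt (Rabs (- x)) (CV_radius (PS_derive (coefA al be)))).
  { rewrite CV_radius_derive. apply coefA_CV; auto. }
  assert (H := is_derive_comp (PSeries (PS_derive (coefA al be))) (fun x => - x) x _ (-1)
     (is_derive_PSeries _ _ C) ltac:(auto_derive; auto; ring)).
  assert (H2 := is_derive_opp _ _ _ H).
  eapply is_derive_eq. exact H2. simpl. unfold scal, opp; simpl; unfold mult; simpl. ring.
Qed.

Lemma fs_ode (al be x : R) : 0 < al ->
  x * fs2 al be x + (al + x) * fs1 al be x + be * fs0 al be x = 0.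
Proof.
  intros Hal. assert (H := series_ode al be (- x) Hal). unfold fs0, fs1, fs2. lra.
Qed.

Lemma fs0_at0 (al be : R) : fs0 al be 0 = 1.
Proof. unfold fs0. rewrite Ropp_0, PSeries_0. unfold coefA. simpl. field. Qed.

Lemma cont_eps (g : R -> R) (x0 : R) : continuous g x0 ->
  forall eps, 0 < eps -> exists d, 0 < d /\ forall x, Rabs (x - x0) < d -> Rabs (g x - g x0) < eps.
Proof.
  intros Hg eps Heps.
  assert (H := Hg (fun y => Rabs (y - g x0) < eps) ltac:(exists (mkposreal eps Heps); intros y Hy; apply ballR in Hy; exact Hy)).
  destruct H as [d Hd]. exists d. split. apply cond_pos. intros x Hx. apply Hd. apply ballR. auto.
Qed.

Definition Vf (a b x : R) : R := Rpower x (a + b) *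
  (- fs0 (a + b) b x * Lap (psi1 a b) x - (fs0 (a + b) b x + fs1 (a + b) b x) * Lap (psi0 a b) x).

Lemma Vf_derive (a b x : R) : 0 < a -> b <= 0 -> 0 < a + b -> 0 < x -> is_derive (Vf a b) x 0.
Proof.
  intros Ha Hb Hab Hx. unfold Vf.
  assert (D0 := fs0_derive (a + b) b x Hab).
  assert (D1 := fs1_derive (a + b) b x Hab).
  assert (DL0 := deriv_L0 a b x Ha ltac:(lra) Hx).
  assert (DL1 := deriv_L1 a b x Ha ltac:(lra) Hx).
  auto_derive.
  - repeat split; try (eexists; eassumption). apply ex_derive_Rpower; auto.
  - rewrite Derive_Rpower by auto.
    replace (Derive (fun x0 => fs0 (a + b) b x0) x) with (fs1 (a + b) b x) by (symmetry; apply is_derive_unique; exact D0).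
    replace (Derive (fun x0 => fs1 (a + b) b x0) x) with (fs2 (a + b) b x) by (symmetry; apply is_derive_unique; exact D1).
    replace (Derive (fun x0 => Lap (psi0 a b) x0) x) with (- Lap (psi1 a b) x) by (symmetry; apply is_derive_unique; exact DL0).
    replace (Derive (fun x0 => Lap (psi1 a b) x0) x) with (- Lap (psi2 a b) x) by (symmetry; apply is_derive_unique; exact DL1).
    assert (I := ibp a b x Ha Hb Hx).
    assert (O := fs_ode (a + b) b x Hab).
    rewrite (Rpower_pred x (a + b)) by auto.
    set (P := Rpower x (a + b - 1)).
    set (F0' := fs0 (a + b) b x). set (F1 := fs1 (a + b) b x). set (F2 := fs2 (a + b) b x).
    set (M0 := Lap (psi0 a b) x). set (M1 := Lap (psi1 a b) x). set (M2 := Lap (psi2 a b) x).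
    fold F0' F1 F2 M0 M1 M2 in I, O.
    transitivity (P * (F0' * (x * M2 - (a + b - x) * M1 - a * M0) - M0 * (x * F2 + (a + b + x) * F1 + b * F0'))).
    ring. rewrite I, O. ring.
Qed.

Lemma Vf_const (a b x y : R) : 0 < a -> b <= 0 -> 0 < a + b -> 0 < x -> x <= y -> Vf a b x = Vf a b y.
Proof.
  intros Ha Hb Hab Hx Hxy.
  destruct (MVT_gen (Vf a b) x y (fun _ => 0)) as [c [Hc E]].
  - intros z Hz. rewrite Rmin_left, Rmax_right in Hz by lra. apply Vf_derive; auto; lra.
  - intros z Hz. rewrite Rmin_left, Rmax_right in Hz by lra.
    apply continuity_pt_filterlim. refine (ex_derive_continuous _ _ _). eexists. apply Vf_derive; auto; lra.
  - lra.
Qed.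

Lemma eq_of_small (z : R) : (forall eps, 0 < eps -> Rabs z <= eps) -> z = 0.
Proof.
  intros H. destruct (Req_dec z 0) as [|Hz]; auto. exfalso.
  assert (Hp : 0 < Rabs z) by (apply Rabs_pos_lt; auto).
  specialize (H (Rabs z / 2) ltac:(lra)). lra.
Qed.

Lemma Vf_value (a b x : R) : 0 < a -> b <= 0 -> 0 < a + b -> a + b < 1 -> 0 < x ->
  Vf a b x = - Gamma_pos (a + b).
Proof.
  intros Ha Hb Hab0 Hab1 Hx.
  set (al := a + b). set (G := Gamma_pos al).
  set (CD := 1 / al + (1 - b) / (1 - al)).
  set (C0 := 1 / a + 1 / (1 - al)).
  assert (HCD : 0 <= CD).
  { unfold CD. assert (0 < 1 / al) by (apply Rdiv_lt_0_compat; unfold al; lra).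
    assert (0 < (1 - b) / (1 - al)) by (apply Rdiv_lt_0_compat; unfold al; lra). lra. }
  assert (HC0 : 0 <= C0).
  { unfold C0. assert (0 < 1 / a) by (apply Rdiv_lt_0_compat; lra).
    assert (0 < 1 / (1 - al)) by (apply Rdiv_lt_0_compat; unfold al; lra). lra. }
  replace (- G) with (0 - G) by ring. apply Rminus_diag_uniq. replace (Vf a b x - (0 - G)) with (Vf a b x + G) by ring.
  apply eq_of_small. intros eps Heps.
  set (e1 := Rmin 1 (eps / (2 * (Rabs G + 1)))).
  assert (He1 : 0 < e1).
  { apply Rmin_glb_lt. lra. apply Rdiv_lt_0_compat. lra. generalize (Rabs_pos G); lra. }
  destruct (cont_eps (fs0 al b) 0 (ex_derive_continuous _ _ (ex_intro _ _ (fs0_derive al b 0 Hab0))) e1 He1) as [d0 [Hd0 Hc0]].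
  destruct (cont_eps (fs1 al b) 0 (ex_derive_continuous _ _ (ex_intro _ _ (fs1_derive al b 0 Hab0))) 1 ltac:(lra)) as [d1 [Hd1 Hc1]].
  set (B := 2 * CD + (3 + Rabs (fs1 al b 0)) * C0 + 1).
  assert (HB : 0 < B) by (unfold B; generalize (Rabs_pos (fs1 al b 0)); nra).
  destruct (small_pow al (eps / (2 * B))) as [d [Hd Hdp]]. unfold al; lra.
  { apply Rdiv_lt_0_compat; lra. }
  set (y := Rmin x (Rmin (d0 / 2) (Rmin (d1 / 2) d))).
  assert (Hy : 0 < y).
  { unfold y. repeat apply Rmin_glb_lt; lra. }
  assert (Hyx : y <= x) by apply Rmin_l.
  assert (Hyd0 : y <= d0 / 2).
  { unfold y. apply Rle_trans with (Rmin (d0/2) (Rmin (d1/2) d)); [apply Rmin_r | apply Rmin_l]. }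
  assert (Hyd1 : y <= d1 / 2).
  { unfold y. apply Rle_trans with (Rmin (d0/2) (Rmin (d1/2) d)). apply Rmin_r.
    apply Rle_trans with (Rmin (d1/2) d); [apply Rmin_r | apply Rmin_l]. }
  assert (Hyd : y <= d).
  { unfold y. apply Rle_trans with (Rmin (d0/2) (Rmin (d1/2) d)). apply Rmin_r.
    apply Rle_trans with (Rmin (d1/2) d); apply Rmin_r. }
  rewrite <- (Vf_const a b y x Ha Hb Hab0 Hy Hyx).
  specialize (Hc0 y ltac:(rewrite Rminus_0_r, Rabs_right; lra)).
  specialize (Hc1 y ltac:(rewrite Rminus_0_r, Rabs_right; lra)).
  rewrite fs0_at0 in Hc0.
  set (P := Rpower y al). set (Q := Rpower y (- al)).
  assert (PQ : P * Q = 1).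
  { unfold P, Q. rewrite <- Rpower_plus. replace (al + - al) with 0 by ring. apply Rpower_O; auto. }
  assert (HP : 0 < P) by apply Rpower_pos.
  assert (HPd : P < eps / (2 * B)).
  { unfold P. apply Rle_lt_trans with (Rpower d al). apply Rpower_le_base. split; lra. unfold al; lra. exact Hdp. }
  set (F0v := fs0 al b y). set (F1v := fs1 al b y).
  set (L0v := Lap (psi0 a b) y). set (L1v := Lap (psi1 a b) y).
  set (Dv := Q * G - L1v).
  assert (HDv : Rabs Dv <= CD) by (apply diff_bound; auto).
  assert (HL0 : Rabs L0v <= C0) by (apply L0_bound; auto).
  assert (E : Vf a b y + G = G * (1 - F0v) + P * (F0v * Dv - (F0v + F1v) * L0v)).
  { unfold Vf. fold al. fold P. fold F0v F1v L0v L1v.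
    transitivity (G * (1 - F0v) + F0v * G * (P * Q) + P * (- F0v * L1v - (F0v + F1v) * L0v)).
    rewrite PQ. ring. unfold Dv. ring. }
  rewrite E.
  assert (HF0 : Rabs F0v <= 2).
  { replace F0v with ((F0v - 1) + 1) by ring. eapply Rle_trans. apply Rabs_triang.
    rewrite Rabs_R1. assert (e1 <= 1) by apply Rmin_l. fold F0v in Hc0. lra. }
  assert (HF01 : Rabs (F0v + F1v) <= 3 + Rabs (fs1 al b 0)).
  { replace (F0v + F1v) with (F0v + (F1v - fs1 al b 0) + fs1 al b 0) by ring.
    eapply Rle_trans. apply Rabs_triang. eapply Rle_trans. apply Rplus_le_compat_r. apply Rabs_triang.
    fold F1v in Hc1. lra. }
  assert (T1 : Rabs (G * (1 - F0v)) <= eps / 2).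
  { rewrite Rabs_mult. replace (1 - F0v) with (- (F0v - 1)) by ring. rewrite Rabs_Ropp.
    assert (e1 <= eps / (2 * (Rabs G + 1))) by apply Rmin_r.
    assert (Rabs (F0v - 1) <= eps / (2 * (Rabs G + 1))) by (fold F0v in Hc0; lra).
    apply Rle_trans with (Rabs G * (eps / (2 * (Rabs G + 1)))).
    apply Rmult_le_compat_l. apply Rabs_pos. auto.
    assert (0 <= Rabs G) by apply Rabs_pos.
    apply Rmult_le_reg_r with (r := 2 * (Rabs G + 1)). lra.
    unfold Rdiv. replace (Rabs G * (eps * / (2 * (Rabs G + 1))) * (2 * (Rabs G + 1))) with (Rabs G * eps) by (field; lra).
    replace (eps * / 2 * (2 * (Rabs G + 1))) with (eps * (Rabs G + 1)) by field. nra. }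
  assert (T2 : Rabs (P * (F0v * Dv - (F0v + F1v) * L0v)) <= eps / 2).
  { rewrite Rabs_mult, (Rabs_right P) by lra.
    assert (Hin : Rabs (F0v * Dv - (F0v + F1v) * L0v) <= B).
    { unfold Rminus. eapply Rle_trans. apply Rabs_triang. rewrite Rabs_Ropp, !Rabs_mult.
      assert (Rabs F0v * Rabs Dv <= 2 * CD) by (apply Rmult_le_compat; auto using Rabs_pos).
      assert (Rabs (F0v + F1v) * Rabs L0v <= (3 + Rabs (fs1 al b 0)) * C0) by (apply Rmult_le_compat; auto using Rabs_pos).
      unfold B. lra. }
    apply Rle_trans with (eps / (2 * B) * B).
    apply Rmult_le_compat; auto using Rabs_pos; lra.
    right. field. lra. }
  eapply Rle_trans. apply Rabs_triang. lra.
Qed.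

Lemma kummerM_eq (be al y : R) : kummerM be al y = PSeries (coefA al be) y.
Proof.
  unfold kummerM, PSeries. apply Series_ext. intros k. unfold coefA. unfold Rdiv. ring.
Qed.

Lemma kummerT_eq (be al y : R) : kummerT be al y = exp y / Gamma (al - be) * Lap (psi0 (al - be) be) (- y).
Proof.
  unfold kummerT, Lap. f_equal. f_equal. apply functional_extensionality. intros t.
  unfold psi0. replace (- - y * t) with (y * t) by ring. ring.
Qed.

Lemma up_inv_n (N : R) : 2 <= N -> up (1 / N) = 1%Z.
Proof.
  intros HN. symmetry. apply tech_up.
  - simpl. apply Rmult_lt_reg_r with (r := N). lra. unfold Rdiv. rewrite Rmult_assoc, Rinv_l by lra. lra.
  - simpl. assert (0 < 1 / N) by (apply Rdiv_lt_0_compat; lra). lra.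
Qed.

Lemma Gamma_am1 (N : R) : 2 <= N -> Gamma (1 - 1 / N - 1) = - N * Gamma_pos (1 - 1 / N).
Proof.
  intros HN. unfold Gamma. replace (- (1 - 1 / N - 1)) with (1 / N) by ring. rewrite up_inv_n by auto.
  change (Z.to_nat 1) with 1%nat. replace (1 - 1 / N - 1 + INR 1) with (1 - 1 / N) by (simpl; ring).
  simpl poch. replace (1 * (1 - 1 / N - 1 + 0)) with (- / N) by (field; lra).
  unfold Rdiv. rewrite Rinv_opp, Rinv_inv. ring.
Qed.

Lemma dX_eq (N J z : R) (n : nat) : N = INR n -> (2 <= n)%nat -> 0 < J -> 0 < z ->
  N * J * z ^ (n - 1) = N * Rpower J (1 / N) * Rpower (J * z ^ n) (1 - 1 / N).
Proof.
  intros HN hn HJ Hz.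
  assert (HN2 : 2 <= N) by (rewrite HN; replace 2 with (INR 2) by (simpl; ring); apply le_INR; auto).
  rewrite <- Rpower_mult_distr by (auto; apply pow_lt; auto).
  rewrite <- (Rpower_pow n z) by auto. rewrite Rpower_mult. rewrite <- HN.
  rewrite <- (Rpower_pow (n - 1) z) by auto. rewrite minus_INR by lia. rewrite <- HN. simpl INR.
  replace (N * (1 - 1 / N)) with (N - 1) by (field; lra).
  transitivity (N * (Rpower J (1 / N) * Rpower J (1 - 1 / N)) * Rpower z (N - 1)).
  rewrite <- Rpower_plus. replace (1 / N + (1 - 1 / N)) with 1 by ring. rewrite Rpower_1 by auto. ring.
  ring.
Qed.

Theorem proposition4p1 (n j : nat) (lambda : R)
  (hn : (2 <= n)%nat) (hj : (0 < j)%nat)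
  (hlam : INR ((n - 1) * j) / 2 <= lambda) :
  let alpha := 1 - 1 / INR n in
  let beta := (1 / 2) * (1 - 1 / INR n) - lambda / (INR j * INR n) in
  let G := fun z : R => exp (INR j * z ^ n / 2) * kummerM beta alpha (- INR j * z ^ n) in
  let D := fun z : R => exp (INR j * z ^ n / 2) * kummerT beta alpha (- INR j * z ^ n) in
  forall z : R, 0 < z ->
    exists dG dD : R,
      is_derive G z dG /\ is_derive D z dD /\
      G z * dD - dG * D z =
        Gamma (alpha - 1) / Gamma (alpha - beta) * Rpower (INR j) (1 / INR n).
Proof.
  intros alpha beta G D z Hz.
  assert (HN : 2 <= INR n) by (replace 2 with (INR 2) by (simpl; ring); apply le_INR; auto).
  assert (HJ : 1 <= INR j) by (replace 1 with (INR 1) by (simpl; ring); apply le_INR; lia).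
  assert (HGam : Gamma (alpha - 1) = - INR n * Gamma_pos alpha) by (apply Gamma_am1; auto).
  rewrite HGam.
  assert (HdX0 := dX_eq (INR n) (INR j) z n eq_refl hn ltac:(lra) Hz).
  set (N := INR n) in *. set (J := INR j) in *.
  assert (Hlam : (N - 1) * J / 2 <= lambda).
  { rewrite mult_INR, minus_INR in hlam by lia. simpl INR in hlam. fold N J in hlam. exact hlam. }
  assert (Hbeta : beta <= 0).
  { unfold beta. assert (lambda / (J * N) >= (N - 1) * J / 2 / (J * N)).
    { unfold Rdiv. apply Rle_ge. apply Rmult_le_compat_r. left; apply Rinv_0_lt_compat; nra. lra. }
    assert (E : (N - 1) * J / 2 / (J * N) = 1 / 2 * (1 - 1 / N)) by (field; lra). lra. }
  assert (Hal0 : 0 < alpha) by (unfold alpha; assert (1 / N <= 1/2) by (apply Rmult_le_reg_r with (r := N); [lra|]; unfold Rdiv; rewrite Rmult_assoc, Rinv_l by lra; lra); lra).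
  assert (Hal1 : alpha < 1) by (unfold alpha; assert (0 < 1 / N) by (apply Rdiv_lt_0_compat; lra); lra).
  fold alpha in HdX0.
  assert (HGeq : forall t, G t = exp (J * t ^ n / 2) * fs0 alpha beta (J * t ^ n)).
  { intros t. unfold G. rewrite kummerM_eq. unfold fs0. replace (- J * t ^ n) with (- (J * t ^ n)) by ring. reflexivity. }
  assert (HDeq : forall t, D t = exp (- (J * t ^ n) / 2) * Lap (psi0 (alpha - beta) beta) (J * t ^ n) / Gamma (alpha - beta)).
  { intros t. unfold D. rewrite kummerT_eq. replace (- (- J * t ^ n)) with (J * t ^ n) by ring.
    replace (exp (- (J * t ^ n) / 2)) with (exp (J * t ^ n / 2) * exp (- J * t ^ n)).
    unfold Rdiv; ring. rewrite <- exp_plus. apply f_equal. field. }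
  set (a := alpha - beta) in *.
  assert (Ha : 0 < a) by (unfold a; lra).
  assert (Hab : a + beta = alpha) by (unfold a; ring).
  set (x0 := J * z ^ n).
  assert (Hx0 : 0 < x0) by (unfold x0; apply Rmult_lt_0_compat; [lra | apply pow_lt; auto]).
  assert (dX : is_derive (fun t => J * t ^ n) z (N * J * z ^ (n - 1))).
  { auto_derive. auto. unfold N. replace (Nat.pred n) with (n - 1)%nat by lia. ring. }
  assert (dGx : is_derive (fun x => exp (x / 2) * fs0 alpha beta x) x0
                 (exp (x0 / 2) / 2 * fs0 alpha beta x0 + exp (x0 / 2) * fs1 alpha beta x0)).
  { auto_derive. eexists; apply fs0_derive; auto.
    replace (Derive (fun x => fs0 alpha beta x) x0) with (fs1 alpha beta x0) by (symmetry; apply is_derive_unique; apply fs0_derive; auto).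
    unfold Rdiv; ring. }
  assert (dDx : is_derive (fun x => exp (- x / 2) * Lap (psi0 a beta) x / Gamma a) x0
                 ((- exp (- x0 / 2) / 2 * Lap (psi0 a beta) x0 + exp (- x0 / 2) * (- Lap (psi1 a beta) x0)) / Gamma a)).
  { assert (DL := deriv_L0 a beta x0 Ha ltac:(lra) Hx0).
    auto_derive. eexists; exact DL.
    replace (Derive (fun x => Lap (psi0 a beta) x) x0) with (- Lap (psi1 a beta) x0) by (symmetry; apply is_derive_unique; exact DL).
    unfold Rdiv; ring. }
  exists (N * J * z ^ (n - 1) * (exp (x0 / 2) / 2 * fs0 alpha beta x0 + exp (x0 / 2) * fs1 alpha beta x0)).
  exists (N * J * z ^ (n - 1) * ((- exp (- x0 / 2) / 2 * Lap (psi0 a beta) x0 + exp (- x0 / 2) * (- Lap (psi1 a beta) x0)) / Gamma a)).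
  split; [|split].
  - eapply is_derive_ext. intros t. symmetry. apply HGeq.
    exact (is_derive_comp (fun x => exp (x / 2) * fs0 alpha beta x) (fun t => J * t ^ n) z _ _ dGx dX).
  - eapply is_derive_ext. intros t. symmetry. apply HDeq.
    assert (H := is_derive_comp (fun x => exp (- x / 2) * Lap (psi0 a beta) x / Gamma a) (fun t => J * t ^ n) z _ _ dDx dX).
    eapply is_derive_ext. 2: exact H. intros t. simpl. replace (- (J * t ^ n) / 2) with (- (J * t ^ n) / 2) by ring. reflexivity.
  - rewrite HGeq, HDeq. fold x0.
    assert (V := Vf_value a beta x0 Ha Hbeta ltac:(lra) ltac:(lra) Hx0).
    unfold Vf in V. rewrite Hab in V.
    assert (EE : exp (x0 / 2) * exp (- x0 / 2) = 1) by (rewrite <- exp_plus; replace (x0 / 2 + - x0 / 2) with 0 by field; apply exp_0).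
    replace (- x0 / 2) with (- x0 / 2) by ring.
    rewrite HdX0. fold x0.
    set (P := Rpower x0 alpha) in *. set (E1 := exp (x0 / 2)) in *. set (E2 := exp (- x0 / 2)) in *.
    set (f0 := fs0 alpha beta x0) in *. set (f1 := fs1 alpha beta x0) in *.
    set (L0 := Lap (psi0 a beta) x0) in *. set (L1 := Lap (psi1 a beta) x0) in *.
    assert (Hh : / 2 + / 2 = 1) by field.
    transitivity (N * Rpower J (1 / N) * (E1 * E2) * (P * (- (/ 2 + / 2) * f0 * L0 - f0 * L1 - f1 * L0)) / Gamma a).
    match goal with |- ?A = ?B => change (@eq R A B) end. unfold Rdiv; ring.
    rewrite Hh.
    transitivity (N * Rpower J (1 / N) * (E1 * E2) * (P * (- f0 * L1 - (f0 + f1) * L0)) / Gamma a).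
    unfold Rdiv; ring.
    match goal with |- ?A = ?B => change (@eq R A B) end. rewrite EE, V. unfold Rdiv. ring.
Qed.
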